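(* Let $X_d=X^{\otimes d}$ and suppose $\sum_{k=1}^\infty\bar\lambda^X_k\mathbf 1(\bar\lambda^X_k<e^{-x})=\varphi(x)$, $x\ge0$, for some slowly varying function $\varphi$. Then $$\lim_{d\to\infty}d\,\varphi\bigl(\ln n^{X_d}(\varepsilon)\bigr)=-\ln(1-\varepsilon^2)\quad\text{for all }\varepsilon\in(0,1).$$
   Context: Let $X$ be a centered random element of a separable Hilbert space $H$ with $\mathbb E\|X\|^2<\infty$, covariance eigenvalues $\lambda^X_1\ge\lambda^X_2\ge\dots\ge0$ (with multiplicity, padded with zeros), $\lambda^X_1>0$, trace $\Lambda^X$, and $\bar\lambda^X_k=\lambda^X_k/\Lambda^X$. $X_d=X^{\otimes d}$ is the centered random element of $H^{\otimes d}$ with covariance operator $(K^X)^{\otimes d}$; its eigenvalues are $\prod_{j=1}^d\lambda^X_{k_j}$. With $\bar\lambda^{X_d}_k$ the normalized nonincreasing eigenvalues of $X_d$, $n^{X_d}(\varepsilon)=\min\{n\in\mathbb N:\sum_{k>n}\bar\lambda^{X_d}_k\le\varepsilon^2\}$. A slowly varying function is a positive measurable $\varphi$ on some $[T,\infty)$ with $\varphi(cx)/\varphi(x)\to1$ as $x\to\infty$ for every $c>0$. *)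

(* Defs.v *)
From Stdlib Require Import Reals Lra List ClassicalEpsilon.
Open Scope R_scope.

(* Normalized eigenvalues  lbar_k = lambda_k / Lambda  (0-based: lbar 0 = \bar\lambda_1). *)
Definition lbar (lam : nat -> R) (Lam : R) (k : nat) : R := lam k / Lam.

Definition multi_index (d : nat) : Type := { l : list nat | length l = d }.

(* Eigenvalue of X_d = X^{(x) d} at a multi-index:  prod_j lbar_{k_j}. *)
Definition prod_eig (lam : nat -> R) (Lam : R) (d : nat) (i : multi_index d) : R :=
  fold_right Rmult 1 (map (lbar lam Lam) (proj1_sig i)).

(* mu is the nonincreasing enumeration, with multiplicity and padded with zeros,
   of the nonnegative family f. *)
Definition is_rearrangement {I : Type} (mu : nat -> R) (f : I -> R) : Prop :=
  (forall k, 0 <= mu k) /\ (forall k, mu (S k) <= mu k) /\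
  exists (g : { k : nat | 0 < mu k } -> { i : I | 0 < f i })
         (h : { i : I | 0 < f i } -> { k : nat | 0 < mu k }),
    (forall x, h (g x) = x) /\ (forall y, g (h y) = y) /\
    (forall x, mu (proj1_sig x) = f (proj1_sig (g x))).

(* The normalized nonincreasing eigenvalues of X_d (chosen; unique when they exist). *)
Definition lbarXd (lam : nat -> R) (Lam : R) (d : nat) : nat -> R :=
  epsilon (inhabits (fun _ : nat => 0))
          (fun mu => is_rearrangement mu (prod_eig lam Lam d)).

(* sum_{k >= n} mu_k <= t  (0-based; = sum_{k>n} in 1-based indexing), for
   nonnegative mu: all partial sums of the tail are <= t. *)
Definition tail_le (mu : nat -> R) (n : nat) (t : R) : Prop :=
  forall m, sum_f_R0 (fun k => mu (n + k)%nat) m <= t.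

Definition is_nX (mu : nat -> R) (eps : R) (n : nat) : Prop :=
  tail_le mu n (eps ^ 2) /\ forall m, (m < n)%nat -> ~ tail_le mu m (eps ^ 2).

Definition nX (mu : nat -> R) (eps : R) : nat :=
  epsilon (inhabits 0%nat) (is_nX mu eps).

Definition slowly_varying (phi : R -> R) : Prop :=
  exists T : R, (forall x, T <= x -> 0 < phi x) /\
    forall c, 0 < c -> forall e, 0 < e -> exists M, forall x, M <= x ->
      Rabs (phi (c * x) / phi x - 1) < e.

(* Main.v *)
Require Import Defs.
From Stdlib Require Import Reals List ClassicalEpsilon.
From Stdlib Require Import Lra Lia Classical ProofIrrelevance.
Open Scope R_scope.


Definition lsum {A} (h : A -> R) (L : list A) : R :=
  fold_right (fun a s => h a + s) 0 L.

Lemma lsum_nil {A} (h : A -> R) : lsum h nil = 0.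
Proof. reflexivity. Qed.
Lemma lsum_cons {A} (h : A -> R) a L : lsum h (a :: L) = h a + lsum h L.
Proof. reflexivity. Qed.
Lemma lsum_app {A} (h : A -> R) L1 L2 : lsum h (L1 ++ L2) = lsum h L1 + lsum h L2.
Proof. induction L1; simpl; [lra|rewrite IHL1; lra]. Qed.
Lemma lsum_map {A B} (h : B -> R) (f : A -> B) L : lsum h (map f L) = lsum (fun a => h (f a)) L.
Proof. induction L; simpl; auto. rewrite IHL; auto. Qed.
Lemma lsum_ext {A} (h g : A -> R) L : (forall a, In a L -> h a = g a) -> lsum h L = lsum g L.
Proof. induction L; simpl; intros H; auto. rewrite H, IHL; auto. Qed.
Lemma lsum_le {A} (h g : A -> R) L : (forall a, In a L -> h a <= g a) -> lsum h L <= lsum g L.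
Proof. induction L; simpl; intros H; [lra|]. pose proof (H a (or_introl eq_refl)).
  assert (lsum h L <= lsum g L) by (apply IHL; auto). lra. Qed.
Lemma lsum_nonneg {A} (h : A -> R) L : (forall a, In a L -> 0 <= h a) -> 0 <= lsum h L.
Proof. induction L; simpl; intros H; [lra|]. pose proof (H a (or_introl eq_refl)).
  assert (0 <= lsum h L) by (apply IHL; auto). lra. Qed.
Lemma lsum_plus {A} (h g : A -> R) L : lsum (fun a => h a + g a) L = lsum h L + lsum g L.
Proof. induction L; simpl; [lra|rewrite IHL; lra]. Qed.
Lemma lsum_minus {A} (h g : A -> R) L : lsum (fun a => h a - g a) L = lsum h L - lsum g L.
Proof. induction L; simpl; [lra|rewrite IHL; lra]. Qed.
Lemma lsum_scal {A} (c : R) (h : A -> R) L : lsum (fun a => c * h a) L = c * lsum h L.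
Proof. induction L; simpl; [lra|rewrite IHL; lra]. Qed.
Lemma lsum_scal_r {A} (c : R) (h : A -> R) L : lsum (fun a => h a * c) L = lsum h L * c.
Proof. induction L; simpl; [lra|rewrite IHL; lra]. Qed.
Lemma lsum_flat_map {A B} (h : B -> R) (f : A -> list B) L :
  lsum h (flat_map f L) = lsum (fun a => lsum h (f a)) L.
Proof. induction L; simpl; auto. rewrite lsum_app, IHL; auto. Qed.

Lemma lsum_incl {A} (h : A -> R) L B : (forall a, 0 <= h a) -> NoDup L -> incl L B ->
  lsum h L <= lsum h B.
Proof.
  intros Hh. revert B. induction L as [|a L IH]; intros B HN HI.
  - simpl. apply lsum_nonneg; auto.
  - inversion HN; subst. assert (In a B) by (apply HI; left; auto).
    destruct (in_split _ _ H) as [B1 [B2 ->]].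
    rewrite lsum_app; simpl.
    assert (lsum h L <= lsum h (B1 ++ B2)).
    { apply IH; auto. intros x Hx. assert (In x (B1 ++ a :: B2)) by (apply HI; right; auto).
      apply in_app_or in H0. apply in_or_app. destruct H0 as [H0|[H0|H0]]; auto.
      subst; contradiction. }
    rewrite lsum_app in H0. lra.
Qed.

Lemma sum_f_R0_lsum f n : sum_f_R0 f n = lsum f (seq 0 (S n)).
Proof.
  induction n. simpl; lra.
  change (sum_f_R0 f (S n)) with (sum_f_R0 f n + f (S n)).
  rewrite IHn, (seq_S (S n) 0), lsum_app. simpl. lra.
Qed.

Definition prodmap (q : nat -> R) (l : list nat) : R := fold_right Rmult 1 (map q l).

Fixpoint boxlist (d K : nat) : list (list nat) :=
  match d with
  | O => nil :: nil
  | S d' => flat_map (fun k => map (cons k) (boxlist d' K)) (seq 0 (S K))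
  end.

Lemma boxlist_In d K l : In l (boxlist d K) <-> length l = d /\ Forall (fun k => (k <= K)%nat) l.
Proof.
  revert l; induction d; intros l; cbn [boxlist].
  - simpl. split. intros [<-|[]]; auto. intros [H _]. destruct l; simpl in *; auto; discriminate.
  - rewrite in_flat_map. split.
    + intros [k [Hk Hl]]. apply in_map_iff in Hl. destruct Hl as [l' [<- Hl']].
      apply IHd in Hl'. destruct Hl'. apply in_seq in Hk. simpl; split; auto. constructor; auto; lia.
    + intros [HL HF]. destruct l as [|k l']; simpl in HL; [discriminate|].
      inversion HF; subst. exists k. split. apply in_seq; lia.
      apply in_map. apply IHd. split; auto.
Qed.

Lemma boxlist_NoDup d K : NoDup (boxlist d K).
Proof.
  induction d; cbn [boxlist]. constructor; auto. constructor.
  generalize (seq_NoDup (S K) 0). generalize (seq 0 (S K)). intros s Hs.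
  induction s; simpl. constructor. inversion Hs; subst.
  apply NoDup_app; auto.
  - apply NoDup_map_NoDup_ForallPairs; auto. intros x y _ _ E; inversion E; auto.
  - intros l Hl Hl2. apply in_map_iff in Hl. destruct Hl as [l' [<- _]].
    apply in_flat_map in Hl2. destruct Hl2 as [k [Hk Hm]]. apply in_map_iff in Hm.
    destruct Hm as [l'' [E _]]. inversion E; subst. contradiction.
Qed.

Lemma prodmap_cons q k l : prodmap q (k :: l) = q k * prodmap q l.
Proof. reflexivity. Qed.

Lemma prodmap_nonneg q l : (forall k, 0 <= q k) -> 0 <= prodmap q l.
Proof. intros H; induction l. cbn; lra. rewrite prodmap_cons. apply Rmult_le_pos; auto. Qed.

Lemma box_step d K (f : list nat -> R) :
  lsum f (boxlist (S d) K) = lsum (fun k => lsum (fun l => f (k :: l)) (boxlist d K)) (seq 0 (S K)).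
Proof. cbn [boxlist]. rewrite lsum_flat_map. apply lsum_ext. intros. rewrite lsum_map. auto. Qed.

Lemma box_prod q d K : lsum (prodmap q) (boxlist d K) = (lsum q (seq 0 (S K))) ^ d.
Proof.
  induction d. cbn. lra.
  rewrite box_step. change ((lsum q (seq 0 (S K))) ^ S d) with (lsum q (seq 0 (S K)) * (lsum q (seq 0 (S K)))^ d).
  rewrite <- IHd. rewrite Rmult_comm, <- lsum_scal. apply lsum_ext. intros k _. rewrite Rmult_comm, <- lsum_scal.
  apply lsum_ext; intros. rewrite prodmap_cons. lra.
Qed.

Lemma pow_le1 x n : 0 <= x <= 1 -> x ^ n <= 1.
Proof. intros H. rewrite <- (pow1 n). apply pow_incr; lra. Qed.

Lemma pow_ge0 x n : 0 <= x -> 0 <= x ^ n.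
Proof. intros; apply pow_le; auto. Qed.

Lemma box_sum_le q g d K : (forall k, 0 <= q k) -> (forall k, 0 <= g k) ->
  lsum q (seq 0 (S K)) <= 1 ->
  lsum (fun l => prodmap q l * lsum g l) (boxlist d K) <= INR d * lsum (fun k => q k * g k) (seq 0 (S K)).
Proof.
  intros Hq Hg HS. set (S0 := lsum q (seq 0 (S K))). set (T := lsum (fun k => q k * g k) (seq 0 (S K))).
  assert (HS0 : 0 <= S0) by (apply lsum_nonneg; auto).
  assert (HT : 0 <= T) by (apply lsum_nonneg; intros; apply Rmult_le_pos; auto).
  induction d.
  - simpl. unfold prodmap; simpl. lra.
  - rewrite box_step.
    set (L := lsum (fun l => prodmap q l * lsum g l) (boxlist d K)) in *.
    assert (E : lsum (fun k => lsum (fun l => prodmap q (k :: l) * lsum g (k :: l)) (boxlist d K)) (seq 0 (S K))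
      = T * S0 ^ d + S0 * L).
    { unfold T, S0, L. rewrite <- box_prod.
      rewrite (lsum_ext _ (fun k => (q k * g k) * lsum (prodmap q) (boxlist d K) + q k * lsum (fun l => prodmap q l * lsum g l) (boxlist d K))).
      - rewrite lsum_plus, lsum_scal_r, lsum_scal_r. ring.
      - intros k _. rewrite <- !lsum_scal, <- lsum_plus. apply lsum_ext; intros l _.
        rewrite prodmap_cons, lsum_cons. ring. }
    rewrite E.
    assert (0 <= L) by (apply lsum_nonneg; intros; apply Rmult_le_pos; [apply prodmap_nonneg; auto| apply lsum_nonneg; auto]).
    assert (S0 ^ d <= 1) by (apply pow_le1; split; [exact HS0|exact HS]).
    assert (S0 <= 1) by exact HS. rewrite S_INR. nra.
Qed.


Lemma exp_le x y : x <= y -> exp x <= exp y.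
Proof. intros [H|H]. left; apply exp_increasing; auto. subst; lra. Qed.

Lemma ln_le x y : 0 < x -> x <= y -> ln x <= ln y.
Proof. intros H [H1|H1]. left; apply ln_increasing; auto. subst; lra. Qed.

Lemma lsum_opp {A} (h : A -> R) L : lsum (fun a => - h a) L = - lsum h L.
Proof. induction L; simpl; [lra|rewrite IHL; lra]. Qed.

Lemma lsum_ge_term {A} (h : A -> R) L a : (forall b, In b L -> 0 <= h b) -> In a L -> h a <= lsum h L.
Proof.
  induction L; simpl; intros H Ha. contradiction.
  destruct Ha as [<-|Ha].
  - assert (0 <= lsum h L) by (apply lsum_nonneg; auto). lra.
  - assert (h a <= lsum h L) by (apply IHL; auto). assert (0 <= h a0) by auto. lra.
Qed.

Lemma prodmap_pos p l : (forall k, 0 < p k) -> 0 < prodmap p l.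
Proof. intros Hp; induction l. cbn; lra. rewrite prodmap_cons. apply Rmult_lt_0_compat; auto. Qed.

Lemma ln_prodmap p l : (forall k, 0 < p k) -> ln (prodmap p l) = lsum (fun k => ln (p k)) l.
Proof.
  intros Hp; induction l. cbn. apply ln_1.
  rewrite prodmap_cons, lsum_cons, ln_mult, IHl; auto.
  apply prodmap_pos; auto.
Qed.

Lemma prodmap_le q p l : (forall k, 0 <= q k <= p k) -> prodmap q l <= prodmap p l.
Proof.
  intros H; induction l. cbn; lra. rewrite !prodmap_cons.
  assert (0 <= prodmap q l) by (apply prodmap_nonneg; intros; apply H).
  destruct (H a). apply Rmult_le_compat; auto.
Qed.

Lemma prodmap_zero q l k : In k l -> q k = 0 -> prodmap q l = 0.
Proof.
  induction l; simpl; intros Hk Hq. contradiction. rewrite prodmap_cons.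
  destruct Hk as [<-|Hk]. rewrite Hq; ring. rewrite IHl; auto; ring.
Qed.

Lemma prodmap_ext q p l : (forall k, In k l -> q k = p k) -> prodmap q l = prodmap p l.
Proof.
  induction l; simpl; intros H. auto. rewrite !prodmap_cons, IHl, H; auto.
Qed.

Definition ind (b : R) (c : R) : R := if Rlt_dec b c then 1 else 0.
Definition lowp (p : nat -> R) (a : R) (k : nat) : R :=
  if Rlt_dec (p k) (exp (- a)) then p k else 0.

Lemma ind_01 b c : 0 <= ind b c <= 1.
Proof. unfold ind; destruct Rlt_dec; lra. Qed.

Lemma pointwise_bound p x z l :
  (forall k, 0 < p k <= 1) -> 0 < x -> 0 <= z <= x ->
  prodmap p l * ind (prodmap p l) (exp (- x))
  <= (prodmap p l - prodmap (fun k => p k - lowp p x k) l)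
     + prodmap p l * lsum (fun k => ind (p k) (exp (- z)) - ind (p k) (exp (- x))) l
     + prodmap p l * lsum (fun k => (if Rlt_dec (p k) (exp (- z)) then 0 else - ln (p k)) / x) l.
Proof.
  intros Hp Hx Hz.
  set (P := prodmap p l). set (Q := prodmap (fun k => p k - lowp p x k) l).
  assert (HP : 0 < P) by (apply prodmap_pos; intros; apply Hp).
  assert (Hexz : exp (- x) <= exp (- z)) by (apply exp_le; lra) .
  assert (Hg2 : forall k, 0 <= ind (p k) (exp (- z)) - ind (p k) (exp (- x))).
  { intros k; unfold ind; do 2 destruct Rlt_dec; lra. }
  assert (Hg3 : forall k, 0 <= (if Rlt_dec (p k) (exp (- z)) then 0 else - ln (p k)) / x).
  { intros k; destruct Rlt_dec. unfold Rdiv; lra. unfold Rdiv; apply Rmult_le_pos; [|left; apply Rinv_0_lt_compat; auto].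
    destruct (Hp k). assert (ln (p k) <= 0). { rewrite <- ln_1. apply ln_le; lra. } lra. }
  assert (S2 : 0 <= lsum (fun k => ind (p k) (exp (- z)) - ind (p k) (exp (- x))) l) by (apply lsum_nonneg; auto).
  assert (S3 : 0 <= lsum (fun k => (if Rlt_dec (p k) (exp (- z)) then 0 else - ln (p k)) / x) l) by (apply lsum_nonneg; auto).
  assert (HQ : 0 <= Q <= P).
  { split. apply prodmap_nonneg; intros k; unfold lowp; destruct Rlt_dec; destruct (Hp k); lra.
    apply prodmap_le. intros k; unfold lowp; destruct Rlt_dec; destruct (Hp k); lra. }
  assert (Hind : 0 <= ind P (exp (- x)) <= 1) by apply ind_01.
  destruct (classic (exists k, In k l /\ p k < exp (- x))) as [[k [Hk Hk2]]|Hall].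
  - assert (Q = 0). { apply (prodmap_zero _ _ k Hk). unfold lowp; destruct Rlt_dec; lra. }
    nra.
  - assert (Q = P). { apply prodmap_ext. intros k Hk. unfold lowp; destruct Rlt_dec; [|lra].
      exfalso; apply Hall; eauto. }
    destruct (classic (exists k, In k l /\ p k < exp (- z))) as [[k [Hk Hk2]]|Hall2].
    + assert (1 <= lsum (fun k => ind (p k) (exp (- z)) - ind (p k) (exp (- x))) l).
      { eapply Rle_trans; [|apply (lsum_ge_term _ _ k); auto].
        unfold ind. destruct Rlt_dec; [|lra]. destruct Rlt_dec. exfalso; apply Hall; eauto. lra. }
      nra.
    + assert (E : lsum (fun k => (if Rlt_dec (p k) (exp (- z)) then 0 else - ln (p k)) / x) l = - ln P / x).
      { unfold P. rewrite ln_prodmap by (intros; apply Hp).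
        rewrite (lsum_ext _ (fun k => - ln (p k) * / x)).
        - rewrite lsum_scal_r, lsum_opp. reflexivity.
        - intros k Hk. destruct Rlt_dec. exfalso; apply Hall2; eauto. reflexivity. }
      rewrite E.
      unfold ind at 1. destruct Rlt_dec as [Hlt|Hge]; [|nra].
      assert (x < - ln P).
      { assert (ln P < - x). { rewrite <- (ln_exp (- x)). apply ln_increasing; auto. } lra. }
      assert (1 <= - ln P / x). { apply (Rmult_le_reg_r x); auto. unfold Rdiv. rewrite Rmult_assoc, Rinv_l; lra. }
      nra.
Qed.


Lemma isum_cv a l : infinite_sum a l -> Un_cv (sum_f_R0 a) l.
Proof. intros H; exact H. Qed.

Lemma partial_le_diff a b la lb : (forall n, b n <= a n) -> infinite_sum a la -> infinite_sum b lb ->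
  forall K, lsum a (seq 0 (S K)) - lsum b (seq 0 (S K)) <= la - lb.
Proof.
  intros Hab Ha Hb K. rewrite <- !sum_f_R0_lsum.
  pose proof (CV_minus _ _ _ _ (isum_cv _ _ Ha) (isum_cv _ _ Hb)) as H.
  apply (growing_ineq (fun i => sum_f_R0 a i - sum_f_R0 b i)); auto.
  intros n. simpl. specialize (Hab (S n)). lra.
Qed.

Lemma isum_zero : infinite_sum (fun _ => 0) 0.
Proof. intros e He. exists O. intros n _. rewrite (sum_eq_R0 _ n) by auto. unfold Rdist; rewrite Rminus_0_r, Rabs_R0; lra. Qed.

Lemma partial_le a la : (forall n, 0 <= a n) -> infinite_sum a la ->
  forall K, lsum a (seq 0 (S K)) <= la.
Proof.
  intros H Ha K. pose proof (partial_le_diff a (fun _ => 0) la 0 H Ha isum_zero K).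
  assert (lsum (fun _ : nat => 0) (seq 0 (S K)) = 0).
  { generalize (seq 0 (S K)). induction l; simpl; auto; lra. }
  lra.
Qed.

Lemma limit_le_diff a b la lb : (forall n, b n <= a n) -> infinite_sum a la -> infinite_sum b lb -> lb <= la.
Proof.
  intros Hab Ha Hb. pose proof (partial_le_diff a b la lb Hab Ha Hb 0). simpl in H. specialize (Hab 0%nat). lra.
Qed.

Lemma pow_diff_bound S W Fx d : 0 <= W -> W <= S -> S <= 1 -> S - W <= Fx -> Fx <= 1 ->
  S ^ d - W ^ d <= 1 - (1 - Fx) ^ d.
Proof.
  intros H1 H2 H3 H4 H5.
  assert (A : S ^ d - W ^ d <= 1 - (1 - (S - W)) ^ d).
  { induction d. simpl; lra.
    simpl. assert (S ^ d <= 1) by (apply pow_le1; lra).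
    assert (0 <= S ^ d) by (apply pow_ge0; lra).
    assert ((1 - (S - W)) ^ d <= 1) by (apply pow_le1; lra).
    set (u := (1 - (S - W)) ^ d) in *. set (sd := S ^ d) in *. set (wd := W ^ d) in *.
    assert (W * (sd - wd) <= W * (1 - u)) by (apply Rmult_le_compat_l; lra).
    assert (W * (1 - u) <= (1 - (S - W)) * (1 - u)) by (apply Rmult_le_compat_r; lra).
    assert (sd * (S - W) <= S - W) by nra.
    nra. }
  assert ((1 - Fx) ^ d <= (1 - (S - W)) ^ d) by (apply pow_incr; lra). lra.
Qed.

Lemma box_tail_bound p F d K x z :
  (forall k, 0 < p k <= 1) -> infinite_sum p 1 ->
  (forall x, 0 <= x -> infinite_sum (lowp p x) (F x)) ->
  0 < x -> 0 <= z <= x ->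
  lsum (fun l => prodmap p l * ind (prodmap p l) (exp (- x))) (boxlist d K)
  <= (1 - (1 - F x) ^ d) + INR d * (F z - F x)
     + INR d * lsum (fun k => p k * ((if Rlt_dec (p k) (exp (- z)) then 0 else - ln (p k)) / x)) (seq 0 (S K)).
Proof.
  intros Hp Hs HF Hx Hz.
  assert (Hp0 : forall k, 0 <= p k) by (intros k; destruct (Hp k); lra).
  eapply Rle_trans. { apply lsum_le. intros l _. apply (pointwise_bound p x z l); auto. }
  rewrite !lsum_plus, lsum_minus, !box_prod.
  set (S0 := lsum p (seq 0 (S K))).
  assert (HS : S0 <= 1) by (apply partial_le; auto).
  assert (Hexz : exp (- x) <= exp (- z)) by (apply exp_le; lra) .
  assert (Hg2 : forall k, 0 <= ind (p k) (exp (- z)) - ind (p k) (exp (- x))).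
  { intros k; unfold ind; do 2 destruct Rlt_dec; lra. }
  assert (Hg3 : forall k, 0 <= (if Rlt_dec (p k) (exp (- z)) then 0 else - ln (p k)) / x).
  { intros k; destruct Rlt_dec. unfold Rdiv; lra. unfold Rdiv; apply Rmult_le_pos; [|left; apply Rinv_0_lt_compat; auto].
    destruct (Hp k). assert (ln (p k) <= 0). { rewrite <- ln_1. apply ln_le; lra. } lra. }
  pose proof (box_sum_le p _ d K Hp0 Hg2 HS) as B2.
  pose proof (box_sum_le p _ d K Hp0 Hg3 HS) as B3.
  assert (M2 : lsum (fun k => p k * (ind (p k) (exp (- z)) - ind (p k) (exp (- x)))) (seq 0 (S K)) <= F z - F x).
  { rewrite (lsum_ext _ (fun k => lowp p z k - lowp p x k)).
    - rewrite lsum_minus. apply partial_le_diff; try apply HF; try lra.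
      intros n; unfold lowp; do 2 destruct Rlt_dec; auto; lra.
    - intros k _. unfold lowp, ind. do 2 destruct Rlt_dec; lra. }
  assert (HFx1 : F x <= 1).
  { apply (limit_le_diff p (lowp p x)). intros n; unfold lowp; destruct Rlt_dec; auto. lra. exact Hs. apply HF; lra. }
  assert (M1 : S0 ^ d - (lsum (fun k => p k - lowp p x k) (seq 0 (S K))) ^ d <= 1 - (1 - F x) ^ d).
  { apply pow_diff_bound; auto.
    - apply lsum_nonneg; intros; unfold lowp; destruct Rlt_dec; [lra|]. rewrite Rminus_0_r; auto.
    - unfold S0. rewrite lsum_minus. assert (0 <= lsum (lowp p x) (seq 0 (S K))).
      apply lsum_nonneg; intros; unfold lowp; destruct Rlt_dec; auto; lra. lra.
    - unfold S0. rewrite lsum_minus. assert (lsum (lowp p x) (seq 0 (S K)) <= F x).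
      apply partial_le. intros; unfold lowp; destruct Rlt_dec; auto; lra. apply HF; lra. lra. }
  assert (0 <= INR d) by apply pos_INR.
  assert (INR d * lsum (fun k => p k * (ind (p k) (exp (- z)) - ind (p k) (exp (- x)))) (seq 0 (S K)) <= INR d * (F z - F x)).
  { apply Rmult_le_compat_l; auto. }
  lra.
Qed.


Lemma lsum_swap {A B} (h : A -> B -> R) (L1 : list A) (L2 : list B) :
  lsum (fun a => lsum (fun b => h a b) L2) L1 = lsum (fun b => lsum (fun a => h a b) L1) L2.
Proof.
  induction L1; simpl. induction L2; simpl; lra.
  rewrite IHL1, <- lsum_plus. reflexivity.
Qed.

Lemma min_dyadic Y M N : 0 <= Y -> 0 < M ->
  Rmin Y (2 ^ N * M) <= M + lsum (fun u => 2 ^ u * M * (if Rlt_dec (2 ^ u * M) Y then 1 else 0)) (seq 0 N).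
Proof.
  intros HY HM. induction N.
  - simpl. unfold Rmin; destruct Rle_dec; lra.
  - rewrite seq_S, lsum_app. simpl.
    assert (0 < 2 ^ N) by (apply pow_lt; lra).
    destruct Rlt_dec.
    + assert (Rmin Y (2 * 2 ^ N * M) <= 2 * 2 ^ N * M) by apply Rmin_r.
      assert (Rmin Y (2 ^ N * M) = 2 ^ N * M) by (unfold Rmin; destruct Rle_dec; lra). lra.
    + assert (Rmin Y (2 * 2 ^ N * M) = Rmin Y (2 ^ N * M)).
      { unfold Rmin; do 2 destruct Rle_dec; nra. }
      lra.
Qed.

Lemma geom_F F M N : 0 < M -> (forall v, M <= v -> 3/4 * F v <= F (2 * v)) -> (forall v, 0 <= v -> 0 <= F v) ->
  lsum (fun u => 2 ^ u * M * F (2 ^ u * M)) (seq 0 N) <= 2 * (2 ^ N * M) * F (2 ^ N * M).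
Proof.
  intros HM H3 H0. induction N.
  - simpl. assert (0 <= F (1 * M)) by (apply H0; lra). nra.
  - rewrite seq_S, lsum_app. simpl.
    assert (1 <= 2 ^ N) by (apply pow_R1_Rle; lra).
    assert (3/4 * F (2^N*M) <= F (2 * 2 ^ N * M)).
    { rewrite Rmult_assoc. apply H3. nra. }
    assert (0 <= F (2^N*M)) by (apply H0; nra).
    assert (0 <= 2^N*M) by nra.
    assert (2 ^ N * M * F (2 ^ N * M) <= 2^N*M * (4/3 * F (2 * 2 ^ N * M))) by (apply Rmult_le_compat_l; lra).
    lra.
Qed.

Lemma E3_bound p F M N K :
  (forall k, 0 < p k <= 1) -> infinite_sum p 1 ->
  (forall x, 0 <= x -> infinite_sum (lowp p x) (F x)) ->
  0 < M -> (forall v, M <= v -> 3/4 * F v <= F (2 * v)) ->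
  lsum (fun k => p k * (if Rlt_dec (p k) (exp (- (2 ^ N * M))) then 0 else - ln (p k))) (seq 0 (S K))
  <= M + 2 * (2 ^ N * M) * F (2 ^ N * M).
Proof.
  intros Hp Hs HF HM H3.
  assert (HF0 : forall v, 0 <= v -> 0 <= F v).
  { intros v Hv. apply (limit_le_diff (lowp p v) (fun _ => 0)); auto.
    intros n; unfold lowp; destruct Rlt_dec; [destruct (Hp n)|]; lra. apply isum_zero. }
  eapply Rle_trans.
  { apply lsum_le. intros k _.
    assert (HY : 0 <= - ln (p k)). { destruct (Hp k). assert (ln (p k) <= 0). { rewrite <- ln_1. apply ln_le; lra. } lra. }
    assert (A : (if Rlt_dec (p k) (exp (- (2 ^ N * M))) then 0 else - ln (p k)) <= Rmin (- ln (p k)) (2 ^ N * M)).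
    { destruct Rlt_dec. apply Rmin_glb; auto. assert (0 < 2^N) by (apply pow_lt; lra). nra.
      assert (- ln (p k) <= 2 ^ N * M).
      { assert (ln (exp (- (2 ^ N * M))) <= ln (p k)) by (apply ln_le; [apply exp_pos|lra]). rewrite ln_exp in H; lra. }
      unfold Rmin; destruct Rle_dec; lra. }
    pose proof (min_dyadic _ M N HY HM) as B.
    assert (p k * (if Rlt_dec (p k) (exp (- (2 ^ N * M))) then 0 else - ln (p k))
      <= p k * M + lsum (fun u => 2 ^ u * M * lowp p (2 ^ u * M) k) (seq 0 N)).
    { apply Rle_trans with (p k * (M + lsum (fun u => 2 ^ u * M * (if Rlt_dec (2 ^ u * M) (- ln (p k)) then 1 else 0)) (seq 0 N))).
      apply Rmult_le_compat_l; [destruct (Hp k); lra| lra].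
      rewrite Rmult_plus_distr_l, <- lsum_scal. apply Rplus_le_compat_l. apply lsum_le. intros u _.
      unfold lowp. destruct (Rlt_dec (2 ^ u * M) (- ln (p k))) as [h1|h1]; destruct (Rlt_dec (p k) (exp (- (2 ^ u * M)))) as [h2|h2].
      - right; ring.
      - exfalso. apply h2. rewrite <- (exp_ln (p k)) by (apply Hp). apply exp_increasing; lra.
      - exfalso. apply h1. assert (ln (p k) < ln (exp (- (2 ^ u * M)))) by (apply ln_increasing; [apply Hp|auto]).
        rewrite ln_exp in H; lra.
      - right; ring. }
    exact H. }
  rewrite lsum_plus, lsum_scal_r, lsum_swap.
  assert (lsum p (seq 0 (S K)) <= 1) by (apply partial_le; auto; intros; destruct (Hp n); lra).
  assert (lsum (fun u => lsum (fun k => 2 ^ u * M * lowp p (2 ^ u * M) k) (seq 0 (S K))) (seq 0 N)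
          <= lsum (fun u => 2 ^ u * M * F (2 ^ u * M)) (seq 0 N)).
  { apply lsum_le. intros u _. rewrite lsum_scal. apply Rmult_le_compat_l.
    assert (0 < 2^u) by (apply pow_lt; lra). nra.
    apply partial_le. intros n; unfold lowp; destruct Rlt_dec; [destruct (Hp n)|]; lra.
    apply HF. assert (0 < 2^u) by (apply pow_lt; lra). nra. }
  pose proof (geom_F F M N HM H3 HF0). nra.
Qed.


Lemma prodmap_le_factor p l k : (forall k, 0 < p k <= 1) -> In k l -> prodmap p l <= p k.
Proof.
  intros Hp; induction l; simpl; intros H. contradiction.
  rewrite prodmap_cons. assert (0 < prodmap p l) by (apply prodmap_pos; apply Hp).
  assert (prodmap p l <= 1).
  { clear IHl H H0. induction l. cbn; lra. rewrite prodmap_cons.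
    assert (0 < prodmap p l) by (apply prodmap_pos; apply Hp). destruct (Hp a0). nra. }
  destruct (Hp a). destruct H as [<-|H]. nra.
  specialize (IHl H). nra.
Qed.

Lemma box_high p F d K y :
  (forall k, 0 < p k <= 1) -> infinite_sum p 1 ->
  (forall x, 0 <= x -> infinite_sum (lowp p x) (F x)) -> 0 <= y ->
  lsum (fun l => prodmap p l * (1 - ind (prodmap p l) (exp (- y)))) (boxlist d K) <= (1 - F y) ^ d.
Proof.
  intros Hp Hs HF Hy.
  eapply Rle_trans with (lsum (prodmap (fun k => p k - lowp p y k)) (boxlist d K)).
  - apply lsum_le. intros l _. unfold ind. destruct Rlt_dec.
    + rewrite Rminus_diag, Rmult_0_r. apply prodmap_nonneg. intros k; unfold lowp; destruct Rlt_dec; destruct (Hp k); lra.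
    + rewrite Rminus_0_r, Rmult_1_r. right. apply prodmap_ext. intros k Hk. unfold lowp. destruct Rlt_dec; [|lra].
      exfalso. apply n. pose proof (prodmap_le_factor p l k Hp Hk). lra.
  - rewrite box_prod. apply pow_incr. split.
    + apply lsum_nonneg. intros k _; unfold lowp; destruct Rlt_dec; destruct (Hp k); lra.
    + rewrite lsum_minus. pose proof (partial_le_diff p (lowp p y) 1 (F y)). 
      rewrite <- lsum_minus. rewrite lsum_minus. apply H; auto. intros n; unfold lowp; destruct Rlt_dec; destruct (Hp n); lra.
Qed.

Lemma bernoulli a d : 0 <= a <= 1 -> 1 - INR d * a <= (1 - a) ^ d.
Proof.
  intros Ha. induction d. simpl; lra.
  rewrite S_INR. simpl. assert (0 <= (1-a)^d) by (apply pow_ge0; lra).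
  assert (0 <= INR d) by apply pos_INR. nra.
Qed.

Lemma lsum_const {A} (c : R) (L : list A) : lsum (fun _ => c) L = INR (length L) * c.
Proof. induction L; simpl length; [simpl; lra|]. rewrite lsum_cons, IHL, S_INR. ring. Qed.

Lemma sum_shift_lsum (a : nat -> R) n m : sum_f_R0 (fun k => a (n + k)%nat) m = lsum a (seq n (S m)).
Proof.
  induction m. simpl. rewrite Nat.add_0_r. lra.
  change (sum_f_R0 (fun k => a (n + k)%nat) (S m)) with (sum_f_R0 (fun k => a (n + k)%nat) m + a (n + S m)%nat).
  rewrite IHm, (seq_S (S m) n), lsum_app. simpl. lra.
Qed.


Lemma sig_eq {A} {P : A -> Prop} (u v : {a : A | P a}) : proj1_sig u = proj1_sig v -> u = v.
Proof. apply eq_sig_hprop. intros; apply proof_irrelevance. Qed.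

Lemma max_exists {A} (h : A -> R) (L : list A) : L <> nil -> exists a, In a L /\ forall b, In b L -> h b <= h a.
Proof.
  induction L as [|x L IH]; intros H. contradiction.
  destruct L as [|y L'].
  - exists x. split. left; auto. intros b [<-|[]]; lra.
  - destruct IH as [a [Ha Hb]]. discriminate.
    destruct (Rle_dec (h x) (h a)).
    + exists a. split. right; auto. intros b [<-|Hb']; auto.
    + exists x. split. left; auto. intros b [<-|Hb']. lra. specialize (Hb b Hb'). lra.
Qed.

Lemma least_exists (P : nat -> Prop) : (exists n, P n) -> exists n, P n /\ forall m, (m < n)%nat -> ~ P m.
Proof.
  intros [n Hn]. revert Hn. induction n as [n IH] using (well_founded_induction Wf_nat.lt_wf).
  intros Hn. destruct (classic (exists m, (m < n)%nat /\ P m)) as [[m [Hm1 Hm2]]|Hno].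
  - apply (IH m); auto.
  - exists n. split; auto. intros m Hm Pm. apply Hno; eauto.
Qed.

Section Rearr.
Variable p : nat -> R.
Variable d : nat.
Hypothesis Hp : forall k, 0 < p k <= 1.
Hypothesis Hsup : forall t, 0 < t -> exists K, forall k, t <= p k -> (k <= K)%nat.
Hypothesis Hd : (1 <= d)%nat.

Let I := multi_index d.
Let f (i : I) : R := prodmap p (proj1_sig i).

Lemma f_pos i : 0 < f i.
Proof. unfold f. apply prodmap_pos. apply Hp. Qed.

Lemma cidx_len n : length (n :: repeat 0%nat (pred d)) = d.
Proof. simpl. rewrite repeat_length. lia. Qed.

Definition cidx (n : nat) : I := exist _ (n :: repeat 0%nat (pred d)) (cidx_len n).

Lemma infinite_I (L : list I) : exists b, ~ In b L.
Proof.
  apply NNPP. intros H. 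
  assert (Hall : forall b, In b L) by (intros b; apply NNPP; intros Hb; apply H; eauto).
  assert (ND : NoDup (map cidx (seq 0 (S (length L))))).
  { apply NoDup_map_NoDup_ForallPairs. intros a b _ _ E. apply (f_equal (@proj1_sig _ _)) in E.
    simpl in E. inversion E; auto. apply seq_NoDup. }
  pose proof (NoDup_incl_length ND (fun b _ => Hall b)). rewrite length_map, length_seq in H0. lia.
Qed.

Lemma superlevel (t : R) : 0 < t -> exists K, forall i : I, t <= f i -> In (proj1_sig i) (boxlist d K).
Proof.
  intros Ht. destruct (Hsup t Ht) as [K HK]. exists K. intros i Hi. apply boxlist_In. split.
  apply (proj2_sig i). apply Forall_forall. intros k Hk. apply HK.
  pose proof (prodmap_le_factor p _ k Hp Hk). unfold f in Hi. lra.
Qed.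

Lemma pick_exists (L : list I) : exists a, ~ In a L /\ forall j, ~ In j L -> f j <= f a.
Proof.
  destruct (infinite_I L) as [b Hb].
  destruct (superlevel (f b) (f_pos b)) as [K HK].
  set (cand := filter (fun l => if in_dec (list_eq_dec Nat.eq_dec) l (map (@proj1_sig _ _) L) then false else true) (boxlist d K)).
  assert (Hbc : In (proj1_sig b) cand).
  { apply filter_In. split. apply HK; lra. destruct in_dec as [Hin|]; auto.
    exfalso. apply in_map_iff in Hin. destruct Hin as [b' [E Hb']]. apply sig_eq in E. subst; auto. }
  destruct (max_exists (prodmap p) cand) as [l [Hl Hmax]]. { intros E; rewrite E in Hbc; contradiction. }
  apply filter_In in Hl. destruct Hl as [Hl1 Hl2]. apply boxlist_In in Hl1. destruct Hl1 as [Hlen _].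
  exists (exist _ l Hlen). split.
  - intros Hin. destruct in_dec as [|n]; [discriminate|]. apply n. apply in_map_iff. exists (exist _ l Hlen); auto.
  - intros j Hj. destruct (Rle_dec (f b) (f j)).
    + apply (Hmax (proj1_sig j)). apply filter_In. split. apply HK; auto.
      destruct (in_dec (list_eq_dec Nat.eq_dec) (proj1_sig j) (map (@proj1_sig _ _) L)) as [Hin|]; auto. exfalso. apply in_map_iff in Hin. destruct Hin as [j' [E Hj']].
      apply sig_eq in E; subst; auto.
    + assert (f b <= prodmap p l) by (apply Hmax; auto). unfold f at 2; simpl. lra.
Qed.

Definition pick (L : list I) : I := proj1_sig (constructive_indefinite_description _ (pick_exists L)).
Lemma pick_spec L : ~ In (pick L) L /\ forall j, ~ In j L -> f j <= f (pick L).
Proof. unfold pick. destruct constructive_indefinite_description; simpl; auto. Qed.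

Fixpoint chs (n : nat) : list I := match n with O => nil | S n => chs n ++ pick (chs n) :: nil end.
Definition e (n : nat) : I := pick (chs n).

Lemma chs_In n x : In x (chs n) <-> exists m, (m < n)%nat /\ x = e m.
Proof.
  induction n; simpl. split. intros []. intros [m [Hm _]]; lia.
  rewrite in_app_iff, IHn. simpl. split.
  - intros [[m [Hm ->]]|[<-|[]]]. exists m; split; auto; lia. exists n; split; auto.
  - intros [m [Hm ->]]. destruct (Nat.eq_dec m n). subst; right; left; auto. left; exists m; split; auto; lia.
Qed.

Lemma e_inj m n : e m = e n -> m = n.
Proof.
  intros E. destruct (Nat.lt_trichotomy m n) as [H|[H|H]]; auto; exfalso.
  - destruct (pick_spec (chs n)) as [Hn _]. apply Hn. apply chs_In. exists m; split; auto.
  - destruct (pick_spec (chs m)) as [Hm _]. apply Hm. apply chs_In. exists n; split; auto.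
Qed.

Lemma e_dec n : f (e (S n)) <= f (e n).
Proof.
  destruct (pick_spec (chs n)) as [_ H]. apply H. intros Hin.
  destruct (pick_spec (chs (S n))) as [Hn _]. apply Hn. simpl. apply in_or_app; left; auto.
Qed.

Lemma e_surj i : exists n, e n = i.
Proof.
  apply NNPP; intros H.
  assert (Hge : forall n, f i <= f (e n)).
  { intros n. destruct (pick_spec (chs n)) as [_ Hs]. apply Hs. intros Hin. apply chs_In in Hin.
    destruct Hin as [m [_ ->]]. apply H; eauto. }
  destruct (superlevel (f i) (f_pos i)) as [K HK].
  set (N := S (length (boxlist d K))).
  assert (ND : NoDup (map (fun n => proj1_sig (e n)) (seq 0 N))).
  { apply NoDup_map_NoDup_ForallPairs. intros a b _ _ E. apply e_inj. apply sig_eq; auto. apply seq_NoDup. }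
  assert (Inc : incl (map (fun n => proj1_sig (e n)) (seq 0 N)) (boxlist d K)).
  { intros l Hl. apply in_map_iff in Hl. destruct Hl as [n [<- _]]. apply HK. apply Hge. }
  pose proof (NoDup_incl_length ND Inc). rewrite length_map, length_seq in H0. unfold N in H0. lia.
Qed.

Definition mu (n : nat) : R := f (e n).

Definition r (i : I) : nat := proj1_sig (constructive_indefinite_description _ (e_surj i)).
Lemma r_spec i : e (r i) = i.
Proof. unfold r. destruct constructive_indefinite_description; auto. Qed.

Lemma mu_r_pos (y : {i : I | 0 < f i}) : 0 < mu (r (proj1_sig y)).
Proof. unfold mu. rewrite r_spec. apply (proj2_sig y). Qed.

Lemma rearr_mu : is_rearrangement mu (fun i : I => prodmap p (proj1_sig i)).
Proof.
  split; [|split].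
  - intros k; unfold mu; left; apply f_pos.
  - intros k; apply e_dec.
  - exists (fun x : {k | 0 < mu k} => exist (fun i : I => 0 < f i) (e (proj1_sig x)) (proj2_sig x)).
    exists (fun y : {i : I | 0 < f i} => exist (fun k => 0 < mu k) (r (proj1_sig y)) (mu_r_pos y)).
    split; [|split].
    + intros x. apply sig_eq; simpl. apply e_inj. apply r_spec.
    + intros y. apply sig_eq; simpl. apply r_spec.
    + intros x. reflexivity.
Qed.

End Rearr.

Lemma rearr_exists p d : (forall k, 0 < p k <= 1) ->
  (forall t, 0 < t -> exists K, forall k, t <= p k -> (k <= K)%nat) -> (1 <= d)%nat ->
  exists mu, is_rearrangement mu (fun i : multi_index d => prodmap p (proj1_sig i)).
Proof. intros H1 H2 H3. exists (mu p d H1 H2 H3). apply rearr_mu; auto. Qed.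


Lemma lsum_filter_zero {A} (h : A -> R) (P : A -> bool) L :
  (forall a, In a L -> P a = false -> h a = 0) -> lsum h L = lsum h (filter P L).
Proof.
  induction L; simpl; intros H; auto. destruct (P a) eqn:E; simpl.
  rewrite IHL; auto. rewrite H, IHL; auto. lra.
Qed.

Definition bigK (LL : list (list nat)) : nat := fold_right (fun l m => Nat.max (fold_right Nat.max 0%nat l) m) 0%nat LL.

Lemma bigK_spec LL l k : In l LL -> In k l -> (k <= bigK LL)%nat.
Proof.
  induction LL; simpl; intros H1 H2. contradiction.
  destruct H1 as [<-|H1].
  - assert (k <= fold_right Nat.max 0%nat a)%nat.
    { clear IHLL. induction a; simpl in *. contradiction. destruct H2 as [<-|H2]. lia. specialize (IHa H2). lia. }
    lia.
  - specialize (IHLL H1 H2). lia.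
Qed.

Lemma bigN_spec (L : list nat) k : In k L -> (k < S (fold_right Nat.max 0%nat L))%nat.
Proof. induction L; simpl; intros H. contradiction. destruct H as [<-|H]. lia. specialize (IHL H). lia. Qed.

Section Props.
Variable p : nat -> R.
Variable d : nat.
Hypothesis Hp : forall k, 0 < p k <= 1.
Variable mu : nat -> R.
Hypothesis Hmu : is_rearrangement mu (fun i : multi_index d => prodmap p (proj1_sig i)).

Lemma mu_nonneg k : 0 <= mu k.
Proof. apply Hmu. Qed.
Lemma mu_dec k : mu (S k) <= mu k.
Proof. apply Hmu. Qed.
Lemma mu_mono m n : (m <= n)%nat -> mu n <= mu m.
Proof. induction 1. lra. pose proof (mu_dec m0). lra. Qed.

Lemma upper_by_box (w : R -> R) (Lk : list nat) : (forall x, 0 <= w x) -> NoDup Lk ->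
  exists K, lsum (fun k => mu k * w (mu k)) Lk <= lsum (fun l => prodmap p l * w (prodmap p l)) (boxlist d K).
Proof.
  intros Hw HN. destruct Hmu as [Hnn [Hdc [g [h [Hhg [Hgh Hval]]]]]].
  set (G := fun k => match Rlt_dec 0 (mu k) with left H => proj1_sig (proj1_sig (g (exist _ k H))) | right _ => nil end).
  assert (HG : forall k, 0 < mu k -> mu k = prodmap p (G k) /\ length (G k) = d).
  { intros k Hk. unfold G. destruct Rlt_dec as [r|]; [|lra]. split. apply (Hval (exist _ k r)). apply (proj2_sig (proj1_sig (g _))). }
  assert (Ginj : forall a b, 0 < mu a -> 0 < mu b -> G a = G b -> a = b).
  { intros a b Ha Hb E. unfold G in E. destruct (Rlt_dec 0 (mu a)) as [r|]; [|lra]. destruct (Rlt_dec 0 (mu b)) as [r0|]; [|lra].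
    assert (E2 : g (exist _ a r) = g (exist _ b r0)) by (apply sig_eq; apply sig_eq; auto).
    apply (f_equal h) in E2. rewrite !Hhg in E2. apply (f_equal (@proj1_sig _ _)) in E2. auto. }
  set (Lp := filter (fun k => if Rlt_dec 0 (mu k) then true else false) Lk).
  assert (HLp : forall k, In k Lp -> 0 < mu k).
  { intros k Hk. apply filter_In in Hk. destruct Rlt_dec; auto. destruct Hk; discriminate. }
  exists (bigK (map G Lp)).
  rewrite (lsum_filter_zero _ (fun k => if Rlt_dec 0 (mu k) then true else false)).
  2:{ intros a _ Ha. destruct Rlt_dec; [discriminate|]. assert (mu a = 0) by (pose proof (Hnn a); lra). rewrite H; ring. }
  fold Lp.
  rewrite (lsum_ext _ (fun k => prodmap p (G k) * w (prodmap p (G k)))).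
  2:{ intros k Hk. destruct (HG k (HLp k Hk)) as [E _]. rewrite <- E. auto. }
  rewrite <- (lsum_map (fun l => prodmap p l * w (prodmap p l)) G).
  apply lsum_incl.
  - intros l. apply Rmult_le_pos; auto. apply prodmap_nonneg. intros; destruct (Hp k); lra.
  - apply NoDup_map_NoDup_ForallPairs. intros a b Ha Hb E. apply Ginj; auto. apply NoDup_filter; auto.
  - intros l Hl. apply boxlist_In. split.
    + apply in_map_iff in Hl. destruct Hl as [k [<- Hk]]. apply HG; auto.
    + apply Forall_forall. intros k Hk. apply (bigK_spec _ l); auto.
Qed.

Lemma lower_by_mu (K : nat) : exists M, lsum (prodmap p) (boxlist d K) <= lsum mu (seq 0 M).
Proof.
  destruct Hmu as [Hnn [Hdc [g [h [Hhg [Hgh Hval]]]]]].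
  assert (Hpos : forall l, 0 < prodmap p l) by (intros; apply prodmap_pos; apply Hp).
  set (Hh := fun l : list nat => match Nat.eq_dec (length l) d with
      | left E => proj1_sig (h (exist (fun i : multi_index d => 0 < prodmap p (proj1_sig i)) (exist _ l E) (Hpos l)))
      | right _ => 0%nat end).
  assert (HH : forall l, length l = d -> mu (Hh l) = prodmap p l).
  { intros l Hl. unfold Hh. destruct Nat.eq_dec; [|contradiction]. rewrite Hval, Hgh. reflexivity. }
  assert (Hinj : forall l1 l2, length l1 = d -> length l2 = d -> Hh l1 = Hh l2 -> l1 = l2).
  { intros l1 l2 H1 H2 E. unfold Hh in E. destruct (Nat.eq_dec (length l1) d); [|contradiction].
    destruct (Nat.eq_dec (length l2) d); [|contradiction].
    apply sig_eq in E. apply (f_equal g) in E. rewrite !Hgh in E.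
    apply (f_equal (@proj1_sig _ _)) in E. apply (f_equal (@proj1_sig _ _)) in E. auto. }
  exists (S (fold_right Nat.max 0%nat (map Hh (boxlist d K)))).
  rewrite (lsum_ext _ (fun l => mu (Hh l))).
  2:{ intros l Hl. apply boxlist_In in Hl. rewrite HH; tauto. }
  rewrite <- (lsum_map mu Hh). apply lsum_incl; auto.
  - apply NoDup_map_NoDup_ForallPairs. intros a b Ha Hb E. apply boxlist_In in Ha, Hb. apply Hinj; tauto.
    apply boxlist_NoDup.
  - intros k Hk. apply in_seq. split. lia. simpl. apply bigN_spec in Hk. lia.
Qed.

End Props.


Lemma seq_split a b : (a <= b)%nat -> seq 0 b = seq 0 a ++ seq a (b - a).
Proof. intros H. replace b with (a + (b - a))%nat at 1 by lia. rewrite seq_app. auto. Qed.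

Section NX.
Variable p : nat -> R.
Variable d : nat.
Hypothesis Hp : forall k, 0 < p k <= 1.
Variable mu : nat -> R.
Hypothesis Hmu : is_rearrangement mu (fun i : multi_index d => prodmap p (proj1_sig i)).
Hypothesis Hbox1 : forall K, lsum (prodmap p) (boxlist d K) <= 1.
Hypothesis Hbox2 : forall rho, 0 < rho -> exists K, 1 - rho <= lsum (prodmap p) (boxlist d K).
Variable eps : R.
Hypothesis Heps : 0 < eps < 1.

Lemma mu_partial_le1 M : lsum mu (seq 0 M) <= 1.
Proof.
  destruct (upper_by_box p d Hp mu Hmu (fun _ => 1) (seq 0 M)) as [K HK]; auto. intros; lra. apply seq_NoDup.
  rewrite (lsum_ext _ mu) in HK by (intros; ring). rewrite (lsum_ext _ (prodmap p)) in HK by (intros; ring).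
  specialize (Hbox1 K). lra.
Qed.

Lemma mu_partial_ge rho : 0 < rho -> exists M, 1 - rho <= lsum mu (seq 0 M).
Proof.
  intros Hr. destruct (Hbox2 rho Hr) as [K HK]. destruct (lower_by_mu p d Hp mu Hmu K) as [M HM].
  exists M. lra.
Qed.

Lemma lsum_seq_mono a b : (a <= b)%nat -> lsum mu (seq 0 a) <= lsum mu (seq 0 b).
Proof.
  intros H. rewrite (seq_split a b H), lsum_app.
  assert (0 <= lsum mu (seq a (b - a))) by (apply lsum_nonneg; intros; apply (mu_nonneg p d mu Hmu)). lra.
Qed.

Lemma nX_upper x : 0 < x ->
  (forall K, lsum (fun l => prodmap p l * ind (prodmap p l) (exp (- x))) (boxlist d K) <= eps ^ 2) ->
  is_nX mu eps (nX mu eps) /\ INR (nX mu eps) <= exp x.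
Proof.
  intros Hx Hbox. set (t := exp (- x)). assert (Ht : 0 < t) by apply exp_pos.
  assert (Hex : exists k, mu k < t).
  { apply NNPP; intros H. destruct (INR_unbounded (1 / t)) as [M HM].
    assert (INR M * t <= lsum mu (seq 0 M)).
    { rewrite <- (length_seq M 0) at 1. rewrite <- lsum_const. apply lsum_le. intros k _.
      apply Rnot_lt_le. intros Hk; apply H; eauto. }
    pose proof (mu_partial_le1 M).
    assert (1 < INR M * t). { apply (Rmult_lt_compat_r t) in HM; auto. unfold Rdiv in HM. rewrite Rmult_1_l, Rinv_l in HM; lra. }
    lra. }
  destruct (least_exists _ Hex) as [N0 [HN0 Hmin]].
  assert (Hge : forall k, (k < N0)%nat -> t <= mu k) by (intros k Hk; apply Rnot_lt_le; apply Hmin; auto).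
  assert (HN0x : INR N0 <= exp x).
  { assert (INR N0 * t <= lsum mu (seq 0 N0)).
    { rewrite <- (length_seq N0 0) at 1. rewrite <- lsum_const. apply lsum_le. intros k Hk. apply in_seq in Hk. apply Hge; lia. }
    pose proof (mu_partial_le1 N0).
    assert (INR N0 * t * exp x = INR N0). { unfold t. rewrite Rmult_assoc, <- exp_plus. replace (- x + x) with 0 by ring. rewrite exp_0; ring. }
    assert (0 < exp x) by apply exp_pos. nra. }
  assert (Htail : tail_le mu N0 (eps ^ 2)).
  { intros m. rewrite sum_shift_lsum.
    destruct (upper_by_box p d Hp mu Hmu (fun v => ind v t) (seq N0 (S m))) as [K HK].
    intros; apply ind_01. apply seq_NoDup.
    eapply Rle_trans; [|eapply Rle_trans; [apply HK| apply Hbox]].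
    right. apply lsum_ext. intros k Hk. apply in_seq in Hk. unfold ind. destruct Rlt_dec. ring.
    exfalso. apply n. pose proof (mu_mono p d mu Hmu N0 k ltac:(lia)). lra. }
  assert (Hn : exists n, is_nX mu eps n).
  { destruct (least_exists (fun n => tail_le mu n (eps ^ 2)) (ex_intro _ N0 Htail)) as [n [Hn1 Hn2]]. exists n. split; auto. }
  assert (Hs : is_nX mu eps (nX mu eps)) by (unfold nX; apply epsilon_spec; auto).
  split; auto.
  assert (nX mu eps <= N0)%nat.
  { destruct (Nat.le_gt_cases (nX mu eps) N0); auto. exfalso. destruct Hs as [_ Hs]. apply (Hs N0); auto. }
  apply le_INR in H. lra.
Qed.

Lemma nX_lower n y B : is_nX mu eps n ->
  (forall K, lsum (fun l => prodmap p l * (1 - ind (prodmap p l) (exp (- y)))) (boxlist d K) <= B) ->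
  1 - eps ^ 2 <= B + INR n * exp (- y).
Proof.
  intros [Htail _] HB. set (t := exp (- y)). assert (Ht : 0 < t) by apply exp_pos.
  assert (A : forall rho, 0 < rho -> 1 - rho - eps ^ 2 <= lsum mu (seq 0 n)).
  { intros rho Hr. destruct (mu_partial_ge rho Hr) as [M HM].
    destruct (Nat.le_gt_cases M n).
    - pose proof (lsum_seq_mono M n H). assert (0 < eps ^ 2) by (apply pow_lt; lra). lra.
    - rewrite (seq_split n M) in HM by lia. rewrite lsum_app in HM.
      destruct (M - n)%nat eqn:E. lia.
      specialize (Htail n0). rewrite sum_shift_lsum in Htail. lra. }
  assert (B1 : lsum mu (seq 0 n) <= INR n * t + B).
  { rewrite (lsum_ext mu (fun k => mu k * ind (mu k) t + mu k * (1 - ind (mu k) t))) by (intros; ring).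
    rewrite lsum_plus. apply Rplus_le_compat.
    - rewrite <- (length_seq n 0) at 2. rewrite <- lsum_const. apply lsum_le. intros k _.
      unfold ind. destruct Rlt_dec; lra.
    - destruct (upper_by_box p d Hp mu Hmu (fun v => 1 - ind v t) (seq 0 n)) as [K HK].
      intros v; pose proof (ind_01 v t); lra. apply seq_NoDup.
      eapply Rle_trans; [apply HK| apply HB]. }
  apply Rnot_lt_le. intros H.
  set (rho := (1 - eps ^ 2 - (B + INR n * t)) / 2).
  assert (0 < rho) by (unfold rho; fold t in H; lra).
  specialize (A rho H0). unfold rho in A. fold t in H. lra.
Qed.

Lemma nX_ge1 n : is_nX mu eps n -> (1 <= n)%nat.
Proof.
  intros [Htail _]. destruct n; [|lia]. exfalso.
  set (rho := (1 - eps ^ 2) / 2).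
  assert (eps ^ 2 < 1) by (simpl; nra).
  assert (0 < rho) by (unfold rho; lra).
  destruct (mu_partial_ge rho H0) as [M HM].
  assert (0 <= eps ^ 2) by (apply pow_ge0; lra). destruct M. { assert (lsum mu (seq 0 0) = 0) by reflexivity. unfold rho in *. lra. }
  specialize (Htail M). rewrite sum_shift_lsum in Htail. unfold rho in HM. lra.
Qed.

End NX.


Lemma exp_pow u d : exp u ^ d = exp (INR d * u).
Proof. induction d. simpl; rewrite Rmult_0_l, exp_0; auto. rewrite S_INR. simpl. rewrite IHd, <- exp_plus. f_equal; ring. Qed.

Lemma pow_le_exp a d : 0 <= a <= 1 -> (1 - a) ^ d <= exp (- (INR d * a)).
Proof.
  intros H. replace (- (INR d * a)) with (INR d * (- a)) by ring. rewrite <- exp_pow.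
  apply pow_incr. pose proof (exp_ineq1_le (- a)). lra.
Qed.

Lemma pow_ge_exp a d : 0 <= a < 1 -> exp (- (INR d * a / (1 - a))) <= (1 - a) ^ d.
Proof.
  intros H. replace (- (INR d * a / (1 - a))) with (INR d * (- (a / (1 - a)))) by (field; lra).
  rewrite <- exp_pow. apply pow_incr. split. left; apply exp_pos.
  pose proof (exp_ineq1_le (a / (1 - a))).
  assert (1 + a / (1 - a) = / (1 - a)) by (field; lra).
  rewrite exp_Ropp. assert (0 < exp (a / (1 - a))) by apply exp_pos.
  assert (/ (1 - a) <= exp (a / (1 - a))) by lra.
  apply Rinv_le_contravar in H3. rewrite Rinv_inv in H3. lra. apply Rinv_0_lt_compat; lra.
Qed.

Section Setup.
Variables (lam : nat -> R) (Lam : R).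
Hypothesis Hnn : forall k, 0 <= lam k.
Hypothesis Hdec : forall k, lam (S k) <= lam k.
Hypothesis Hpos : 0 < lam 0%nat.
Hypothesis Htrace : infinite_sum lam Lam.

Lemma Lam_pos : 0 < Lam.
Proof. pose proof (partial_le lam Lam Hnn Htrace 0). simpl in H. lra. Qed.

Lemma p_sum : infinite_sum (lbar lam Lam) 1.
Proof.
  pose proof Lam_pos.
  assert (H1 : Un_cv (fun n => sum_f_R0 lam n * / Lam) (Lam * / Lam)).
  { apply CV_mult. exact Htrace. intros e He. exists O. intros; unfold Rdist. rewrite Rminus_diag, Rabs_R0; auto. }
  rewrite Rinv_r in H1 by lra.
  intros e He. destruct (H1 e He) as [N HN]. exists N. intros n Hn.
  replace (sum_f_R0 (lbar lam Lam) n) with (sum_f_R0 lam n * / Lam). apply HN; auto.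
  rewrite Rmult_comm, scal_sum. apply sum_eq. intros; unfold lbar, Rdiv; ring.
Qed.

Lemma p_dec k : lbar lam Lam (S k) <= lbar lam Lam k.
Proof. unfold lbar, Rdiv. pose proof Lam_pos. apply Rmult_le_compat_r. left; apply Rinv_0_lt_compat; auto. auto. Qed.

Lemma p_mono j k : (j <= k)%nat -> lbar lam Lam k <= lbar lam Lam j.
Proof. induction 1. lra. pose proof (p_dec m). lra. Qed.

Lemma p_nonneg k : 0 <= lbar lam Lam k.
Proof. unfold lbar, Rdiv. pose proof Lam_pos. apply Rmult_le_pos; auto. left; apply Rinv_0_lt_compat; auto. Qed.

Lemma p_le1 k : lbar lam Lam k <= 1.
Proof.
  pose proof (partial_le _ _ p_nonneg p_sum k).
  rewrite (seq_S k 0), lsum_app in H. simpl in H.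
  assert (0 <= lsum (lbar lam Lam) (seq 0 k)) by (apply lsum_nonneg; intros; apply p_nonneg). lra.
Qed.

Lemma p_sup t : 0 < t -> exists K, forall k, t <= lbar lam Lam k -> (k <= K)%nat.
Proof.
  intros Ht. destruct (INR_unbounded (1 / t)) as [K HK]. exists K. intros k Hk.
  destruct (Nat.le_gt_cases k K); auto. exfalso.
  pose proof (partial_le _ _ p_nonneg p_sum k).
  assert (INR (S k) * t <= lsum (lbar lam Lam) (seq 0 (S k))).
  { rewrite <- (length_seq (S k) 0) at 1. rewrite <- lsum_const. apply lsum_le. intros j Hj.
    apply in_seq in Hj. pose proof (p_mono j k ltac:(lia)). lra. }
  assert (INR K + 1 <= INR (S k)) by (rewrite <- S_INR; apply le_INR; lia).
  assert (1 < INR K * t). { apply (Rmult_lt_compat_r t) in HK; auto. unfold Rdiv in HK. rewrite Rmult_1_l, Rinv_l in HK; lra. }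
  nra.
Qed.

Variable phi : R -> R.
Hypothesis Hphi : forall x, 0 <= x -> infinite_sum (lowp (lbar lam Lam) x) (phi x).

Lemma phi_to0 eta : (forall k, 0 < lbar lam Lam k) -> 0 < eta -> exists X, 0 <= X /\ forall x, X <= x -> phi x <= eta.
Proof.
  intros Hpp He. destruct (p_sum eta He) as [K HK]. specialize (HK K (le_n K)).
  unfold Rdist in HK. rewrite sum_f_R0_lsum in HK. apply Rabs_def2 in HK.
  exists (Rmax 0 (- ln (lbar lam Lam K))). split. apply Rmax_l. intros x Hx.
  assert (Hx0 : 0 <= x) by (eapply Rle_trans; [apply Rmax_l|eauto]).
  pose proof (partial_le_diff (lbar lam Lam) (lowp (lbar lam Lam) x) 1 (phi x)) as D.
  assert (lsum (lowp (lbar lam Lam) x) (seq 0 (S K)) = 0).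
  { rewrite (lsum_ext _ (fun _ => 0)). rewrite lsum_const; ring.
    intros k Hk. apply in_seq in Hk. unfold lowp. destruct Rlt_dec; auto. exfalso.
    pose proof (p_mono k K ltac:(lia)).
    assert (Hx2 : - ln (lbar lam Lam K) <= x) by (eapply Rle_trans; [apply Rmax_r|eauto]).
    assert (0 < lbar lam Lam K) by apply Hpp.
    assert (exp (- x) <= lbar lam Lam K). { rewrite <- (exp_ln (lbar lam Lam K)) by auto. apply exp_le. lra. }
    lra. }
  assert (lsum (lbar lam Lam) (seq 0 (S K)) - lsum (lowp (lbar lam Lam) x) (seq 0 (S K)) <= 1 - phi x).
  { apply D. intros n; unfold lowp; destruct Rlt_dec; [lra|apply p_nonneg]. apply p_sum. apply Hphi; auto. }
  lra.
Qed.

Lemma phi_mono x y : 0 <= x <= y -> phi y <= phi x.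
Proof.
  intros H. apply (limit_le_diff (lowp (lbar lam Lam) x) (lowp (lbar lam Lam) y)); try apply Hphi; try lra.
  intros n; unfold lowp. assert (exp (- y) <= exp (- x)) by (apply exp_le; lra).
  do 2 destruct Rlt_dec; try lra. apply p_nonneg.
Qed.

Lemma phi_nonneg x : 0 <= x -> 0 <= phi x.
Proof.
  intros Hx. apply (limit_le_diff (lowp (lbar lam Lam) x) (fun _ => 0)); auto.
  intros n; unfold lowp; destruct Rlt_dec; [apply p_nonneg|lra]. apply isum_zero.
Qed.

Lemma p_pos (T : R) : (forall x, T <= x -> 0 < phi x) -> forall k, 0 < lbar lam Lam k.
Proof.
  intros HT k. apply NNPP; intros Hk.
  destruct (least_exists (fun k => ~ 0 < lbar lam Lam k) (ex_intro _ k Hk)) as [k0 [Hk0 Hmin]].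
  destruct k0 as [|k1].
  { apply Hk0. unfold lbar, Rdiv. apply Rmult_lt_0_compat; auto. apply Rinv_0_lt_compat, Lam_pos. }
  assert (Hq : 0 < lbar lam Lam k1) by (apply NNPP; intros; apply (Hmin k1); auto).
  set (x := Rmax T (- ln (lbar lam Lam k1))).
  assert (Hx0 : 0 <= x).
  { eapply Rle_trans; [|apply Rmax_r]. assert (ln (lbar lam Lam k1) <= 0). { rewrite <- ln_1. apply ln_le; auto. apply p_le1. } lra. }
  assert (Hex : exp (- x) <= lbar lam Lam k1).
  { rewrite <- (exp_ln (lbar lam Lam k1)) by auto. apply exp_le. pose proof (Rmax_r T (- ln (lbar lam Lam k1))). fold x in H. lra. }
  assert (Z : forall n, lowp (lbar lam Lam) x n = 0).
  { intros n. unfold lowp. destruct Rlt_dec; auto.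
    destruct (Nat.le_gt_cases n k1).
    - pose proof (p_mono n k1 H). lra.
    - assert (lbar lam Lam n <= lbar lam Lam (S k1)) by (apply p_mono; lia).
      pose proof (p_nonneg (S k1)). pose proof (p_nonneg n). apply Rnot_lt_le in Hk0. lra. }
  assert (phi x = 0).
  { apply (UL_sequence (sum_f_R0 (lowp (lbar lam Lam) x))). apply Hphi; auto.
    intros e He. exists O. intros n _. rewrite (sum_eq_R0 _ n) by auto. unfold Rdist; rewrite Rminus_0_r, Rabs_R0; lra. }
  assert (0 < phi x) by (apply HT; apply Rmax_l). lra.
Qed.

End Setup.


Section PerD.
Variables (lam : nat -> R) (Lam : R) (phi : R -> R).
Hypothesis Hnn : forall k, 0 <= lam k.
Hypothesis Hdec : forall k, lam (S k) <= lam k.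
Hypothesis Hpos : 0 < lam 0%nat.
Hypothesis Htrace : infinite_sum lam Lam.
Hypothesis Hphi : forall x, 0 <= x -> infinite_sum (lowp (lbar lam Lam) x) (phi x).
Hypothesis Hpp : forall k, 0 < lbar lam Lam k.
Variable eps : R.
Hypothesis Heps : 0 < eps < 1.

Local Notation p := (lbar lam Lam).
Lemma Hp' : forall k, 0 < p k <= 1.
Proof. intros k; split. apply Hpp. apply p_le1; auto. Qed.

Lemma mu_rearr d : (1 <= d)%nat -> is_rearrangement (lbarXd lam Lam d) (fun i : multi_index d => prodmap p (proj1_sig i)).
Proof.
  intros Hd. unfold lbarXd. apply (epsilon_spec (inhabits (fun _ : nat => 0)) (fun mu => is_rearrangement mu (prod_eig lam Lam d))).
  apply (rearr_exists p d Hp'); auto. apply p_sup; auto.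
Qed.

Lemma box1 d K : lsum (prodmap p) (boxlist d K) <= 1.
Proof.
  rewrite box_prod. apply pow_le1. split. apply lsum_nonneg; intros; apply p_nonneg; auto.
  apply partial_le. apply p_nonneg; auto. apply p_sum; auto.
Qed.

Lemma box2 d rho : 0 < rho -> exists K, 1 - rho <= lsum (prodmap p) (boxlist d K).
Proof.
  intros Hr. set (r := rho / (INR d + 1)).
  assert (Hr' : 0 < r) by (unfold r; apply Rdiv_lt_0_compat; auto; pose proof (pos_INR d); lra).
  destruct (p_sum lam Lam Hnn Hpos Htrace r Hr') as [K HK]. exists K. specialize (HK K (le_n K)).
  unfold Rdist in HK. rewrite sum_f_R0_lsum in HK. apply Rabs_def2 in HK.
  rewrite box_prod. set (S0 := lsum p (seq 0 (S K))) in *.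
  assert (S0 <= 1) by (apply partial_le; [apply p_nonneg; auto| apply p_sum; auto]).
  assert (0 <= S0) by (apply lsum_nonneg; intros; apply p_nonneg; auto).
  pose proof (bernoulli (1 - S0) d ltac:(lra)) as HB. replace (1 - (1 - S0)) with S0 in HB by ring.
  assert (INR d * (1 - S0) <= rho).
  { assert (INR d * (1 - S0) <= INR d * r) by (apply Rmult_le_compat_l; [apply pos_INR|lra]).
    assert (INR d * r <= rho). { pose proof (pos_INR d).
      apply Rle_trans with ((INR d + 1) * r). nra. unfold r; right; field; lra. }
    lra. }
  lra.
Qed.

Lemma bounds_upper d x M N : (1 <= d)%nat -> 0 < x -> 0 < M -> 2 ^ N * M <= x ->
  (forall v, M <= v -> 3/4 * phi v <= phi (2 * v)) ->
  (1 - (1 - phi x) ^ d) + INR d * (phi (2 ^ N * M) - phi x)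
     + INR d * ((M + 2 * (2 ^ N * M) * phi (2 ^ N * M)) / x) <= eps ^ 2 ->
  is_nX (lbarXd lam Lam d) eps (nX (lbarXd lam Lam d) eps) /\ INR (nX (lbarXd lam Lam d) eps) <= exp x.
Proof.
  intros Hd Hx HM Hz H34 Hsum.
  apply (nX_upper p d Hp' _ (mu_rearr d Hd) (box1 d) eps x Hx).
  intros K. eapply Rle_trans; [apply (box_tail_bound p phi d K x (2 ^ N * M) Hp'); auto|].
  apply p_sum; auto. split; auto. left; apply Rmult_lt_0_compat; auto. apply pow_lt; lra.
  eapply Rle_trans; [|apply Hsum]. apply Rplus_le_compat_l. apply Rmult_le_compat_l. apply pos_INR.
  rewrite (lsum_ext _ (fun k => p k * (if Rlt_dec (p k) (exp (- (2 ^ N * M))) then 0 else - ln (p k)) * / x)).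
  rewrite lsum_scal_r. unfold Rdiv. apply Rmult_le_compat_r. left; apply Rinv_0_lt_compat; auto.
  apply (E3_bound p phi M N K Hp'); auto. apply p_sum; auto.
  intros k _. unfold Rdiv; ring.
Qed.

Lemma bounds_lower d y : (1 <= d)%nat -> 0 <= y ->
  is_nX (lbarXd lam Lam d) eps (nX (lbarXd lam Lam d) eps) ->
  1 - eps ^ 2 <= (1 - phi y) ^ d + INR (nX (lbarXd lam Lam d) eps) * exp (- y).
Proof.
  intros Hd Hy Hs. apply (nX_lower p d Hp' _ (mu_rearr d Hd) (box2 d) eps Heps); auto.
  intros K. apply box_high; auto. apply Hp'. apply p_sum; auto.
Qed.

Lemma bounds_ge1 d : (1 <= d)%nat -> is_nX (lbarXd lam Lam d) eps (nX (lbarXd lam Lam d) eps) ->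
  (1 <= nX (lbarXd lam Lam d) eps)%nat.
Proof.
  intros Hd Hs. apply (nX_ge1 p d Hp' _ (mu_rearr d Hd) (box2 d) eps Heps); auto.
Qed.

End PerD.


Lemma pow_big (b B : R) (m : nat) : 1 < b -> exists i, (m <= i)%nat /\ B <= b ^ i.
Proof.
  intros Hb. destruct (INR_unbounded (B / (b - 1))) as [i Hi].
  exists (Nat.max i m). split. lia.
  pose proof (poly i (b - 1) ltac:(lra)). replace (1 + (b - 1)) with b in H by ring.
  assert (B <= INR i * (b - 1)).
  { apply Rlt_le. apply (Rmult_lt_compat_r (b - 1)) in Hi; [|lra]. unfold Rdiv in Hi.
    rewrite Rmult_assoc, Rinv_l, Rmult_1_r in Hi; lra. }
  assert (b ^ i <= b ^ Nat.max i m) by (apply Rle_pow; lia || lra). lra.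
Qed.

Lemma pow2_ge1 j : 1 <= 2 ^ j.
Proof. apply pow_R1_Rle; lra. Qed.

Lemma grid_growth (F : R -> R) M : 0 < M -> (forall v, M <= v -> 3/4 * F v <= F (2 * v)) ->
  forall v, M <= v -> forall j, (3/4) ^ j * F v <= F (2 ^ j * v).
Proof.
  intros HM H v Hv j. induction j. simpl. rewrite !Rmult_1_l. lra.
  simpl. rewrite Rmult_assoc. pose proof (pow2_ge1 j).
  assert (3/4 * F (2 ^ j * v) <= F (2 * (2 ^ j * v))) by (apply H; nra).
  rewrite <- Rmult_assoc in H1 |- *. nra.
Qed.

Lemma ratio_bounds (phi : R -> R) (T : R) : (forall x, T <= x -> 0 < phi x) ->
  (forall c, 0 < c -> forall e, 0 < e -> exists M, forall x, M <= x -> Rabs (phi (c * x) / phi x - 1) < e) ->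
  forall c e, 0 < c -> 0 < e -> exists A, forall x, A <= x ->
    0 < phi x /\ (1 - e) * phi x <= phi (c * x) /\ phi (c * x) <= (1 + e) * phi x.
Proof.
  intros HT Hsv c e Hc He. destruct (Hsv c Hc e He) as [M HM]. exists (Rmax T M). intros x Hx.
  assert (Hp : 0 < phi x) by (apply HT; eapply Rle_trans; [apply Rmax_l|eauto]).
  specialize (HM x ltac:(eapply Rle_trans; [apply Rmax_r|eauto])).
  apply Rabs_def2 in HM. destruct HM as [H1 H2].
  assert (phi (c * x) / phi x * phi x = phi (c * x)) by (field; lra).
  split; auto. split; nra.
Qed.

Ltac max_le := match goal with
 | |- ?x <= ?x => apply Rle_refl
 | |- _ <= Rmax _ _ => first [ eapply Rle_trans; [|apply Rmax_l]; max_le | eapply Rle_trans; [|apply Rmax_r]; max_le ]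
 end.

Section Main.
Variables (phi : R -> R) (nf : nat -> nat) (Q : nat -> Prop) (eps : R).
Hypothesis Heps : 0 < eps < 1.
Hypothesis Hge0 : forall x, 0 <= x -> 0 <= phi x.
Hypothesis Hle1 : forall x, 0 <= x -> phi x <= 1.
Hypothesis Hmono : forall x y, 0 <= x -> x <= y -> phi y <= phi x.
Hypothesis Hto0 : forall eta, 0 < eta -> exists X, forall x, X <= x -> phi x <= eta.
Hypothesis Hsv : slowly_varying phi.
Hypothesis HU : forall d x M N, (1 <= d)%nat -> 0 < x -> 0 < M -> 2 ^ N * M <= x ->
  (forall v, M <= v -> 3/4 * phi v <= phi (2 * v)) ->
  (1 - (1 - phi x) ^ d) + INR d * (phi (2 ^ N * M) - phi x)
     + INR d * ((M + 2 * (2 ^ N * M) * phi (2 ^ N * M)) / x) <= eps ^ 2 ->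
  Q d /\ INR (nf d) <= exp x.
Hypothesis HL : forall d y, (1 <= d)%nat -> 0 <= y -> Q d ->
  1 - eps ^ 2 <= (1 - phi y) ^ d + INR (nf d) * exp (- y).
Hypothesis H1 : forall d, (1 <= d)%nat -> Q d -> (1 <= nf d)%nat.

Theorem main_asym : Un_cv (fun d => INR d * phi (ln (INR (nf d)))) (- ln (1 - eps ^ 2)).
Proof.
  intros zeta Hzeta.
  set (c := - ln (1 - eps ^ 2)).
  assert (He2 : 0 < eps ^ 2 < 1) by (simpl; split; nra).
  assert (Hec : exp (- c) = 1 - eps ^ 2) by (unfold c; rewrite Ropp_involutive, exp_ln; lra).
  assert (Hc : 0 < c).
  { unfold c. assert (ln (1 - eps ^ 2) < 0) by (rewrite <- ln_1; apply ln_increasing; lra). lra. }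
  destruct Hsv as [T [HT Hsv']].
  set (s := Rmin zeta c / 2).
  assert (Hs : 0 < s /\ s < c /\ s < zeta).
  { unfold s. pose proof (Rmin_l zeta c). pose proof (Rmin_r zeta c).
    assert (0 < Rmin zeta c) by (apply Rmin_glb_lt; lra). lra. }
  destruct Hs as [Hs0 [Hsc Hsz]].
  destruct (ratio_bounds phi T HT Hsv' 2 (1/4) ltac:(lra) ltac:(lra)) as [A0 HA0].
  set (M := Rmax 1 A0).
  assert (HM : 0 < M) by (unfold M; pose proof (Rmax_l 1 A0); lra).
  assert (HMA0 : A0 <= M) by apply Rmax_r.
  assert (H34 : forall v, M <= v -> 3/4 * phi v <= phi (2 * v)).
  { intros v Hv. destruct (HA0 v ltac:(lra)) as [_ [Ha _]]. lra. }
  assert (Hpos : forall v, M <= v -> 0 < phi v) by (intros v Hv; apply (HA0 v); lra).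
  set (c1 := c + s / 2). set (th := s / (8 * c1)). set (ga := exp (- c) - exp (- c1)).
  assert (Hth : 0 < th /\ th <= 1/8).
  { unfold th, c1. split. apply Rdiv_lt_0_compat; lra.
    apply Rmult_le_reg_r with (8 * (c + s / 2)). lra. unfold Rdiv. rewrite Rmult_assoc, Rinv_l; lra. }
  assert (Hga : 0 < ga) by (unfold ga; assert (exp (- c1) < exp (- c)) by (apply exp_increasing; unfold c1; lra); lra).
  assert (Hga1 : ga < 1) by (unfold ga; pose proof (exp_pos (- c1)); lra).
  set (c2 := c - s / 2). set (th' := s / (2 * c)). set (ph0 := s / (4 * c)).
  set (be := exp (- c) * (exp (s / 4) - 1) / 3).
  assert (Hbe : 0 < be).
  { unfold be. assert (1 < exp (s / 4)) by (rewrite <- exp_0; apply exp_increasing; lra).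
    pose proof (exp_pos (- c)). apply Rdiv_lt_0_compat; [nra|lra]. }
  set (th2 := be / c).
  assert (Hth2 : 0 < th2) by (unfold th2; apply Rdiv_lt_0_compat; lra).
  destruct (pow_big 2 (2 * (1 + th2) * c / be) 0 ltac:(lra)) as [m [_ Hm]].
  assert (H2m : 0 < 2 ^ m) by (apply pow_lt; lra).
  destruct (ratio_bounds phi T HT Hsv' (1/2) th ltac:(lra) ltac:(lra)) as [A1 HA1].
  destruct (ratio_bounds phi T HT Hsv' 2 (th / (1 + th)) ltac:(lra) ltac:(apply Rdiv_lt_0_compat; lra)) as [A2 HA2].
  assert (Hth' : 0 < th' <= 1/2).
  { unfold th'. split. apply Rdiv_lt_0_compat; lra.
    apply Rmult_le_reg_r with (2 * c). lra. unfold Rdiv. rewrite Rmult_assoc, Rinv_l; lra. }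
  destruct (ratio_bounds phi T HT Hsv' (1/2) th' ltac:(lra) ltac:(lra)) as [A3 HA3].
  assert (Hph0 : 0 < ph0 < 1).
  { unfold ph0. split. apply Rdiv_lt_0_compat; lra.
    apply Rmult_lt_reg_r with (4 * c). lra. unfold Rdiv. rewrite Rmult_assoc, Rinv_l; lra. }
  destruct (Hto0 ph0 ltac:(lra)) as [A4 HA4].
  destruct (ratio_bounds phi T HT Hsv' (/ 2 ^ m) th2 ltac:(apply Rinv_0_lt_compat; lra) Hth2) as [A5 HA5].
  set (A := Rmax (Rmax (Rmax A1 A2) (Rmax A3 A4)) (Rmax (Rmax A5 (- 2 * ln ga)) M)).
  assert (HA1A : A1 <= A) by (unfold A; max_le).
  assert (HA2A : A2 <= A) by (unfold A; max_le).
  assert (HA3A : A3 <= A) by (unfold A; max_le).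
  assert (HA4A : A4 <= A) by (unfold A; max_le).
  assert (HA5A : A5 <= A) by (unfold A; max_le).
  assert (HgaA : - 2 * ln ga <= A) by (unfold A; max_le).
  assert (HMA : M <= A) by (unfold A; max_le).
  assert (HphiM : 0 < phi M) by (apply Hpos; lra).
  destruct (pow_big (3/2) (Rmax (A / M) (c / (be * phi M))) m ltac:(lra)) as [i [Him Hi]].
  assert (H32 : (3/2) ^ i <= 2 ^ i) by (apply pow_incr; lra).
  set (M1 := 2 ^ i * M).
  assert (HM1A : A <= M1).
  { unfold M1. assert (A / M <= 2 ^ i) by (apply Rle_trans with (Rmax (A / M) (c / (be * phi M))); [apply Rmax_l|lra]).
    apply Rmult_le_compat_r with (r := M) in H; [|lra]. unfold Rdiv in H. rewrite Rmult_assoc, Rinv_l, Rmult_1_r in H; lra. }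
  assert (HM1M : M <= M1) by lra.
  assert (HphiM1 : 0 < phi M1) by (apply Hpos; lra).
  assert (HM1F : M * c / be <= M1 * phi M1).
  { pose proof (grid_growth phi M HM H34 M (Rle_refl M) i) as G.
    assert (c / (be * phi M) <= (3/2) ^ i) by (apply Rle_trans with (Rmax (A / M) (c / (be * phi M))); [apply Rmax_r|lra]).
    assert (E : (3/2) ^ i = 2 ^ i * (3/4) ^ i) by (rewrite <- Rpow_mult_distr; f_equal; lra).
    unfold M1. apply Rle_trans with (2 ^ i * M * ((3/4) ^ i * phi M)).
    - replace (2 ^ i * M * ((3 / 4) ^ i * phi M)) with ((3/2) ^ i * (M * phi M)) by (rewrite E; ring).
      apply Rle_trans with (c / (be * phi M) * (M * phi M)).
      + right. field. lra.
      + apply Rmult_le_compat_r; [nra|lra].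
    - pose proof (pow2_ge1 i). apply Rmult_le_compat_l; [nra|lra]. }
  set (y := fun j => 2 ^ j * M1).
  assert (Hy_ge : forall j, M1 <= y j) by (intros j; unfold y; pose proof (pow2_ge1 j); nra).
  assert (Hy_S : forall j, y (S j) = 2 * y j) by (intros j; unfold y; simpl; ring).
  assert (Hy_pos : forall j, 0 < phi (y j)) by (intros j; apply Hpos; pose proof (Hy_ge j); lra).
  assert (Hy_grow : forall j, M1 * phi M1 <= y j * phi (y j)).
  { intros j. pose proof (grid_growth phi M HM H34 M1 HM1M j) as G. unfold y.
    assert (E : (3/2) ^ j = 2 ^ j * (3/4) ^ j) by (rewrite <- Rpow_mult_distr; f_equal; lra).
    assert (1 <= (3/2) ^ j) by (apply pow_R1_Rle; lra).
    apply Rle_trans with (2 ^ j * M1 * ((3/4) ^ j * phi M1)).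
    - replace (2 ^ j * M1 * ((3 / 4) ^ j * phi M1)) with ((3/2) ^ j * (M1 * phi M1)) by (rewrite E; ring).
      assert (0 < M1 * phi M1) by (apply Rmult_lt_0_compat; lra). nra.
    - pose proof (pow2_ge1 j). apply Rmult_le_compat_l; [nra|lra]. }
  assert (Hy_to0 : forall eta, 0 < eta -> exists j, phi (y j) <= eta).
  { intros eta Heta. destruct (Hto0 eta Heta) as [X HX]. destruct (pow_big 2 (X / M1) 0 ltac:(lra)) as [j [_ Hj]].
    exists j. apply HX. unfold y. apply Rmult_le_compat_r with (r := M1) in Hj; [|lra].
    unfold Rdiv in Hj. rewrite Rmult_assoc, Rinv_l, Rmult_1_r in Hj; lra. }
  destruct (INR_unbounded (c1 / phi M1)) as [N0 HN0].
  exists (Nat.max N0 1). intros d Hd.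
  assert (Hd1 : (1 <= d)%nat) by lia.
  assert (HdR : 0 < INR d) by (apply lt_0_INR; lia).
  assert (HdM1 : c1 < INR d * phi M1).
  { assert (INR N0 <= INR d) by (apply le_INR; lia).
    apply (Rmult_lt_compat_r (phi M1)) in HN0; auto. unfold Rdiv in HN0. rewrite Rmult_assoc, Rinv_l, Rmult_1_r in HN0; nra. }
  assert (Hc2 : 0 < c2) by (unfold c2; lra).
  destruct (Hy_to0 (c2 / INR d) ltac:(apply Rdiv_lt_0_compat; lra)) as [jz Hjz].
  assert (Pjz : INR d * phi (y jz) <= c2).
  { apply Rmult_le_compat_l with (r := INR d) in Hjz; [|lra]. unfold Rdiv in Hjz.
    rewrite (Rmult_comm c2), <- Rmult_assoc, Rinv_r, Rmult_1_l in Hjz; lra. }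
  destruct (least_exists (fun j => INR d * phi (y j) <= c2) (ex_intro _ jz Pjz)) as [j1 [Hj1 Hj1min]].
  destruct j1 as [|k].
  { exfalso. assert (y 0%nat = M1) by (unfold y; simpl; ring). rewrite H in Hj1. unfold c1, c2 in *. lra. }
  assert (Hk : c2 < INR d * phi (y k)) by (apply Rnot_le_lt; apply (Hj1min k); lia).
  set (x := y (S k)).
  assert (HxM1 : M1 <= x) by apply Hy_ge.
  assert (Hx0 : 0 < x) by lra.
  assert (Hphx : 0 < phi x) by apply Hy_pos.
  set (N := (S k + i - m)%nat).
  assert (Ez : 2 ^ N * M = / 2 ^ m * x).
  { unfold x, y, M1. replace (2 ^ S k * (2 ^ i * M)) with (2 ^ (S k + i) * M) by (rewrite pow_add; ring).
    replace (S k + i)%nat with (N + m)%nat by (unfold N; lia). rewrite pow_add. field. lra. }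
  assert (Hzx : 2 ^ N * M <= x).
  { rewrite Ez. assert (/ 2 ^ m <= 1). { rewrite <- Rinv_1. apply Rinv_le_contravar. lra. apply pow2_ge1. } nra. }
  assert (HaX : phi x <= ph0) by (apply HA4; lra).
  assert (Hdx : INR d * phi x <= c2) by exact Hj1.
  assert (T1 : 1 - (1 - phi x) ^ d <= eps ^ 2 - 3 * be).
  { pose proof (pow_ge_exp (phi x) d ltac:(lra)) as PG.
    assert (Hq : INR d * phi x / (1 - phi x) <= c - s / 4).
    { apply Rmult_le_reg_r with (1 - phi x). lra. unfold Rdiv. rewrite Rmult_assoc, Rinv_l, Rmult_1_r by lra.
      assert (ph0 * c = s / 4) by (unfold ph0; field; lra).
      assert ((c - s / 4) * phi x <= c * ph0) by nra.
      unfold c2 in Hdx. nra. }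
    assert (exp (- (c - s / 4)) <= exp (- (INR d * phi x / (1 - phi x)))) by (apply exp_le; lra).
    assert (exp (- (c - s / 4)) = exp (- c) + 3 * be).
    { unfold be. replace (- (c - s / 4)) with (- c + s / 4) by ring. rewrite exp_plus. field. }
    lra. }
  destruct (HA5 x ltac:(lra)) as [_ [_ HA5x]]. rewrite <- Ez in HA5x.
  assert (Hthc : th2 * c = be) by (unfold th2; field; lra).
  assert (T2 : INR d * (phi (2 ^ N * M) - phi x) <= be).
  { assert (INR d * (phi (2 ^ N * M) - phi x) <= INR d * (th2 * phi x)) by (apply Rmult_le_compat_l; lra).
    assert (INR d * (th2 * phi x) = th2 * (INR d * phi x)) by ring.
    assert (th2 * (INR d * phi x) <= th2 * c) by (apply Rmult_le_compat_l; unfold c2 in *; lra).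
    lra. }
  assert (T3 : INR d * ((M + 2 * (2 ^ N * M) * phi (2 ^ N * M)) / x) <= 2 * be).
  { assert (E3 : INR d * ((M + 2 * (2 ^ N * M) * phi (2 ^ N * M)) / x)
       = INR d * M / x + 2 * / 2 ^ m * (INR d * phi (2 ^ N * M))).
    { rewrite Ez. field. split; lra. }
    rewrite E3.
    assert (A1' : INR d * M / x <= be).
    { pose proof (Hy_grow (S k)) as G. fold x in G.
      assert (M * c <= be * (x * phi x)).
      { apply Rmult_le_compat_r with (r := be) in HM1F; [|lra]. unfold Rdiv in HM1F.
        rewrite Rmult_assoc, Rinv_l, Rmult_1_r in HM1F by lra. nra. }
      assert (M * (INR d * phi x) <= M * c) by (apply Rmult_le_compat_l; unfold c2 in *; lra).
      assert (INR d * M <= be * x).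
      { apply Rmult_le_reg_r with (phi x); auto. nra. }
      apply Rmult_le_reg_r with x; auto. unfold Rdiv. rewrite Rmult_assoc, Rinv_l, Rmult_1_r by lra. lra. }
    assert (INR d * phi (2 ^ N * M) <= (1 + th2) * c).
    { assert (INR d * phi (2 ^ N * M) <= INR d * ((1 + th2) * phi x)) by (apply Rmult_le_compat_l; lra).
      assert (INR d * ((1 + th2) * phi x) = (1 + th2) * (INR d * phi x)) by ring.
      assert ((1 + th2) * (INR d * phi x) <= (1 + th2) * c) by (apply Rmult_le_compat_l; unfold c2 in *; lra).
      lra. }
    assert (2 * / 2 ^ m * (INR d * phi (2 ^ N * M)) <= be).
    { assert (2 * (1 + th2) * c <= be * 2 ^ m).
      { apply Rmult_le_compat_r with (r := be) in Hm; [|lra]. unfold Rdiv in Hm.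
        rewrite Rmult_assoc, Rinv_l, Rmult_1_r in Hm by lra. lra. }
      apply Rmult_le_reg_r with (2 ^ m); auto.
      replace (2 * / 2 ^ m * (INR d * phi (2 ^ N * M)) * 2 ^ m) with (2 * (INR d * phi (2 ^ N * M))) by (field; lra).
      nra. }
    lra. }
  destruct (HU d x M N Hd1 Hx0 HM Hzx H34 ltac:(lra)) as [HQ Hnx].
  assert (Hn1 : 1 <= INR (nf d)) by (rewrite <- INR_1; apply le_INR; apply H1; auto).
  assert (Hln0 : 0 <= ln (INR (nf d))) by (rewrite <- ln_1; apply ln_le; lra).
  assert (Hlnx : ln (INR (nf d)) <= x) by (rewrite <- (ln_exp x); apply ln_le; lra).
  assert (LOW : c - s <= INR d * phi (ln (INR (nf d)))).
  { assert (phi x <= phi (ln (INR (nf d)))) by (apply Hmono; auto).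
    destruct (HA3 x ltac:(lra)) as [_ [_ HA3x]].
    assert (E : 1 / 2 * x = y k) by (unfold x; rewrite Hy_S; field).
    rewrite E in HA3x.
    assert (c2 < (1 + th') * (INR d * phi x)).
    { assert (INR d * phi (y k) <= INR d * ((1 + th') * phi x)) by (apply Rmult_le_compat_l; lra). nra. }
    assert (th' * c = s / 2) by (unfold th'; field; lra).
    assert (c - s <= INR d * phi x).
    { apply Rnot_lt_le; intros Hc'. unfold c2 in *.
      assert ((1 + th') * (INR d * phi x) < (1 + th') * (c - s)) by (apply Rmult_lt_compat_l; lra).
      assert ((1 + th') * (c - s) <= c - s / 2) by nra. lra. }
    assert (INR d * phi x <= INR d * phi (ln (INR (nf d)))) by (apply Rmult_le_compat_l; lra). lra. }
  assert (Hc1 : 0 < c1) by (unfold c1; lra).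
  destruct (Hy_to0 (c1 / (2 * INR d)) ltac:(apply Rdiv_lt_0_compat; lra)) as [ju Hju].
  assert (Pju : INR d * phi (y (S ju)) < c1).
  { assert (phi (y (S ju)) <= phi (y ju)) by (apply Hmono; [pose proof (Hy_ge ju); lra| rewrite Hy_S; pose proof (Hy_ge ju); lra]).
    apply Rmult_le_compat_l with (r := INR d) in Hju; [|lra].
    replace (INR d * (c1 / (2 * INR d))) with (c1 / 2) in Hju by (field; lra).
    assert (INR d * phi (y (S ju)) <= INR d * phi (y ju)) by (apply Rmult_le_compat_l; lra). lra. }
  destruct (least_exists (fun j => INR d * phi (y (S j)) < c1) (ex_intro _ ju Pju)) as [j0 [Hj0 Hj0min]].
  assert (Hj0ge : c1 <= INR d * phi (y j0)).
  { destruct j0 as [|k'].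
    - assert (y 0%nat = M1) by (unfold y; simpl; ring). rewrite H. lra.
    - apply Rnot_lt_le. apply (Hj0min k'); lia. }
  set (yy := y j0) in *.
  assert (HyyM1 : M1 <= yy) by apply Hy_ge.
  pose proof (HL d yy Hd1 ltac:(lra) HQ) as HLy.
  assert (Hphyy : 0 <= phi yy <= 1) by (split; [apply Hge0|apply Hle1]; lra).
  assert ((1 - phi yy) ^ d <= exp (- c1)).
  { eapply Rle_trans; [apply pow_le_exp; auto|]. apply exp_le. lra. }
  assert (Hng : ga * exp yy <= INR (nf d)).
  { assert (ga <= INR (nf d) * exp (- yy)) by (unfold ga; lra).
    apply Rmult_le_compat_r with (r := exp yy) in H0; [|left; apply exp_pos].
    rewrite Rmult_assoc, <- exp_plus in H0. replace (- yy + yy) with 0 in H0 by ring. rewrite exp_0, Rmult_1_r in H0. lra. }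
  assert (Hlnn : ln ga + yy <= ln (INR (nf d))).
  { rewrite <- (ln_exp yy) at 1. rewrite <- ln_mult; auto. apply ln_le; auto.
    apply Rmult_lt_0_compat; auto. apply exp_pos. apply exp_pos. }
  assert (Hhalf : 1 / 2 * yy <= ln (INR (nf d))) by lra.
  assert (UP : INR d * phi (ln (INR (nf d))) <= c + s).
  { assert (phi (ln (INR (nf d))) <= phi (1 / 2 * yy)) by (apply Hmono; lra).
    destruct (HA1 yy ltac:(lra)) as [_ [_ HA1y]].
    destruct (HA2 yy ltac:(lra)) as [Hpyy [HA2y _]].
    assert (E2 : 2 * yy = y (S j0)) by (unfold yy; rewrite Hy_S; auto).
    rewrite E2 in HA2y.
    assert (phi yy <= (1 + th) * phi (y (S j0))).
    { replace (1 - th / (1 + th)) with (/ (1 + th)) in HA2y by (field; lra).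
      apply Rmult_le_compat_l with (r := 1 + th) in HA2y; [|lra].
      rewrite <- Rmult_assoc, Rinv_r, Rmult_1_l in HA2y by lra. lra. }
    assert (th * c1 = s / 8) by (unfold th; field; lra).
    assert (0 <= phi (ln (INR (nf d)))) by (apply Hge0; lra).
    assert (INR d * phi (ln (INR (nf d))) <= INR d * ((1 + th) * ((1 + th) * phi (y (S j0))))).
    { apply Rmult_le_compat_l; [lra|]. assert ((1 + th) * phi yy <= (1 + th) * ((1 + th) * phi (y (S j0)))) by (apply Rmult_le_compat_l; lra). lra. }
    replace (INR d * ((1 + th) * ((1 + th) * phi (y (S j0))))) with ((1 + th) * (1 + th) * (INR d * phi (y (S j0)))) in H5 by ring.
    assert ((1 + th) * (1 + th) * (INR d * phi (y (S j0))) <= (1 + th) * (1 + th) * c1).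
    { apply Rmult_le_compat_l; [nra|lra]. }
    unfold c1 in *. nra. }
  unfold Rdist. apply Rabs_def1; lra.
Qed.

End Main.

Theorem theorem9 (lam : nat -> R) (Lam : R) (phi : R -> R)
  (Hnn : forall k, 0 <= lam k)
  (Hdec : forall k, lam (S k) <= lam k)
  (Hpos : 0 < lam 0%nat)
  (Htrace : infinite_sum lam Lam)
  (Hsv : slowly_varying phi)
  (Hphi : forall x, 0 <= x ->
     infinite_sum
       (fun k => if Rlt_dec (lbar lam Lam k) (exp (- x)) then lbar lam Lam k else 0)
       (phi x)) :
  forall eps : R, 0 < eps < 1 ->
    Un_cv (fun d => INR d * phi (ln (INR (nX (lbarXd lam Lam d) eps))))
          (- ln (1 - eps ^ 2)).
Proof.
  intros eps Heps.
  assert (Hphi' : forall x, 0 <= x -> infinite_sum (lowp (lbar lam Lam) x) (phi x)) by exact Hphi.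
  assert (Hpp : forall k, 0 < lbar lam Lam k).
  { destruct Hsv as [T [HT _]]. exact (p_pos lam Lam Hnn Hdec Hpos Htrace phi Hphi' T HT). }
  apply (main_asym phi (fun d => nX (lbarXd lam Lam d) eps) (fun d => is_nX (lbarXd lam Lam d) eps (nX (lbarXd lam Lam d) eps)) eps Heps).
  - apply (phi_nonneg lam Lam Hnn Hpos Htrace phi Hphi').
  - intros x Hx. apply (limit_le_diff (lbar lam Lam) (lowp (lbar lam Lam) x)).
    + intros n; unfold lowp; destruct Rlt_dec; [lra|]. apply p_nonneg; auto.
    + apply p_sum; auto.
    + apply Hphi'; auto.
  - intros x y Hx Hxy. apply (phi_mono lam Lam Hnn Hpos Htrace phi Hphi'); lra.
  - intros eta Heta. destruct (phi_to0 lam Lam Hnn Hdec Hpos Htrace phi Hphi' eta Hpp Heta) as [X [_ HX]]. eauto.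
  - exact Hsv.
  - intros d x M N Hd Hx HM Hz H34 Hsum.
    exact (bounds_upper lam Lam phi Hnn Hdec Hpos Htrace Hphi' Hpp eps d x M N Hd Hx HM Hz H34 Hsum).
  - intros d y Hd Hy HQ. exact (bounds_lower lam Lam phi Hnn Hdec Hpos Htrace Hphi' Hpp eps Heps d y Hd Hy HQ).
  - intros d Hd HQ. exact (bounds_ge1 lam Lam Hnn Hdec Hpos Htrace Hpp eps Heps d Hd HQ).
Qed.
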